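(* Let $p\in S$ be a nonzero orthogonal projection. The following are equivalent: (i) $p\otimes p\le\delta(p)$; (ii) $\delta(p)(1\otimes p)=p\otimes p$; (iii) $\delta(p)(p\otimes1)=p\otimes p$; (iv) $\rho(\omega_{e,pe})\ge0$; (v) $\langle e,pe\rangle^{-1}\rho(\omega_{e,pe})$ is an orthogonal projection; (vi) $f=\|pe\|^{-1}pe$ is a pre-subgroup of $V$ and $p=L(\omega_{f,f})$.
   Context: Let $\mathcal H$ be a finite-dimensional Hilbert space (inner products linear in the second variable) and $V$ a multiplicative unitary on $\mathcal H$ ($V_{12}V_{13}V_{23}=V_{23}V_{12}$) of multiplicity 1 (one-dimensional space of fixed vectors $\xi$, i.e. $V(\xi\otimes\eta)=\xi\otimes\eta$ for all $\eta$). Fix a unit fixed vector $e$. $\omega_{\xi,\eta}(T)=\langle\xi,T\eta\rangle$; $L(\omega)=(\omega\otimes\mathrm{id})(V)$, $\rho(\omega)=(\mathrm{id}\otimes\omega)(V)$; $S=\{L(\omega):\omega\in\mathcal L(\mathcal H)^*\}$ is a unital $*$-subalgebra of $\mathcal L(\mathcal H)$, and $\delta:S\to S\otimes S$, $\delta(x)=V(x\otimes1)V^*$. A pre-subgroup is $f\in\mathcal H$ with $\|f\|=1$, $\langle f,e\rangle>0$, $V(f\otimes f)=f\otimes f$. *)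

(* Defs.v *)
(* Finite-dimensional Hilbert space H = C^I (I a finite type,
   standard inner product, linear in the second variable), over an arbitrary
   numClosedFieldType C (e.g. algC or complex R); operators are kernels
   I -> I -> C, H (x) H = C^(I * I). *)
From HB Require Import structures.
From mathcomp Require Import all_boot all_order all_algebra.
Set Implicit Arguments. Unset Strict Implicit. Unset Printing Implicit Defensive.
Import Order.TTheory GRing.Theory Num.Theory.
Local Open Scope ring_scope.

Section Hilb.
Variable C : numClosedFieldType.

Definition vec (I : finType) := I -> C.
Definition op (I : finType) := I -> I -> C.

Definition inner {I : finType} (x y : vec I) : C := \sum_i (x i)^* * y i.
Definition vnorm {I : finType} (x : vec I) : C := sqrtC (inner x x).
Definition vscale {I : finType} (c : C) (x : vec I) : vec I := fun i => c * x i.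

Definition opapp {I : finType} (T : op I) (x : vec I) : vec I :=
  fun i => \sum_j T i j * x j.
Definition opmul {I : finType} (A B : op I) : op I :=
  fun i k => \sum_j A i j * B j k.
Definition opadj {I : finType} (A : op I) : op I := fun i j => (A j i)^*.
Definition op1 {I : finType} : op I := fun i j => (i == j)%:R.
Definition op0 {I : finType} : op I := fun _ _ => 0.
Definition opsub {I : finType} (A B : op I) : op I := fun i j => A i j - B i j.
Definition opscale {I : finType} (c : C) (A : op I) : op I := fun i j => c * A i j.

Definition vtens {I J : finType} (x : vec I) (y : vec J) : vec (I * J)%type :=
  fun ij => x ij.1 * y ij.2.
Definition optens {I J : finType} (A : op I) (B : op J) : op (I * J)%type :=
  fun ij kl => A ij.1 kl.1 * B ij.2 kl.2.

(* leg numbering on H (x) H (x) H = C^((I * I) * I)%type *)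
Definition leg12 {I : finType} (V : op (I * I)%type) : op ((I * I) * I)%type :=
  optens V op1.
Definition leg23 {I : finType} (V : op (I * I)%type) : op ((I * I) * I)%type :=
  fun a b => (a.1.1 == b.1.1)%:R * V (a.1.2, a.2) (b.1.2, b.2).
Definition leg13 {I : finType} (V : op (I * I)%type) : op ((I * I) * I)%type :=
  fun a b => V (a.1.1, a.2) (b.1.1, b.2) * (a.1.2 == b.1.2)%:R.

Definition unitary {I : finType} (U : op I) :=
  opmul (opadj U) U = op1 /\ opmul U (opadj U) = op1.

Definition multiplicative_unitary {I : finType} (V : op (I * I)%type) :=
  unitary V /\
  opmul (opmul (leg12 V) (leg13 V)) (leg23 V) = opmul (leg23 V) (leg12 V).

Definition fixed_vector {I : finType} (V : op (I * I)%type) (xi : vec I) :=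
  forall eta : vec I, opapp V (vtens xi eta) = vtens xi eta.

Definition lin_functional {I : finType} (w : op I -> C) :=
  (forall A B, w (fun i j => A i j + B i j) = w A + w B) /\
  (forall c A, w (opscale c A) = c * w A).

Definition omega {I : finType} (xi eta : vec I) : op I -> C :=
  fun T => inner xi (opapp T eta).

(* slice maps: L(w) = (w (x) id)(V),  rho(w) = (id (x) w)(V) *)
Definition Lsl {I : finType} (V : op (I * I)%type) (w : op I -> C) : op I :=
  fun k l => w (fun i j => V (i, k) (j, l)).
Definition rho {I : finType} (V : op (I * I)%type) (w : op I -> C) : op I :=
  fun i j => w (fun k l => V (i, k) (j, l)).

Definition inS {I : finType} (V : op (I * I)%type) (x : op I) :=
  exists w, lin_functional w /\ x = Lsl V w.

Definition delta {I : finType} (V : op (I * I)%type) (x : op I) : op (I * I)%type :=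
  opmul (opmul V (optens x op1)) (opadj V).

Definition positive_op {I : finType} (A : op I) :=
  forall x : vec I, 0 <= inner x (opapp A x).
Definition op_le {I : finType} (A B : op I) := positive_op (opsub B A).

Definition orth_proj {I : finType} (p : op I) :=
  opadj p = p /\ opmul p p = p.

Definition pre_subgroup {I : finType} (V : op (I * I)%type) (e f : vec I) :=
  vnorm f = 1 /\ 0 < inner f e /\ opapp V (vtens f f) = vtens f f.

End Hilb.
Arguments op1 {C I}.
Arguments op0 {C I}.

(* Main.v *)
Require Import Defs.
From HB Require Import structures.
From mathcomp Require Import all_boot all_order all_algebra.
From Stdlib Require Import FunctionalExtensionality.
From mathcomp Require Import ring.
Import Order.TTheory GRing.Theory Num.Theory.
Local Open Scope ring_scope.
Set Implicit Arguments. Unset Strict Implicit. Unset Printing Implicit Defensive.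

Section Gen.
Variable C : numClosedFieldType.
Variable J : finType.
Implicit Types (x y z : vec C J) (A B P U : op C J).

Definition vadd x y : vec C J := fun i => x i + y i.
Definition vsub x y : vec C J := fun i => x i - y i.
Definition vzero : vec C J := fun _ => 0.
Definition delt (j : J) : vec C J := fun i => (i == j)%:R.
Definition tr A : C := \sum_i A i i.

Lemma inner_conj x y : inner y x = (inner x y)^*.
Proof.
rewrite /inner rmorph_sum; apply: eq_bigr => i _.
by rewrite rmorphM /= conjCK mulrC.
Qed.

Lemma innerDr x y z : inner x (vadd y z) = inner x y + inner x z.
Proof. by rewrite /inner -big_split; apply: eq_bigr => i _; rewrite mulrDr. Qed.
Lemma innerBr x y z : inner x (vsub y z) = inner x y - inner x z.
Proof. by rewrite /inner -sumrB; apply: eq_bigr => i _; rewrite mulrBr. Qed.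
Lemma innerDl x y z : inner (vadd x y) z = inner x z + inner y z.
Proof. by rewrite /inner -big_split; apply: eq_bigr => i _; rewrite rmorphD mulrDl. Qed.
Lemma innerBl x y z : inner (vsub x y) z = inner x z - inner y z.
Proof. by rewrite /inner -sumrB; apply: eq_bigr => i _; rewrite rmorphB mulrBl. Qed.
Lemma innerZr x c y : inner x (vscale c y) = c * inner x y.
Proof. by rewrite /inner mulr_sumr; apply: eq_bigr => i _; rewrite /vscale mulrCA. Qed.
Lemma innerZl x c y : inner (vscale c x) y = c^* * inner x y.
Proof. by rewrite /inner mulr_sumr; apply: eq_bigr => i _; rewrite /vscale rmorphM mulrA. Qed.
Lemma inner0r x : inner x vzero = 0.
Proof. by rewrite /inner big1 // => i _; rewrite mulr0. Qed.

Lemma inner_ge0 x : 0 <= inner x x.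
Proof. by rewrite /inner sumr_ge0 // => i _; rewrite mulrC mul_conjC_ge0. Qed.

Lemma inner_real x : (inner x x)^* = inner x x.
Proof. by rewrite geC0_conj // inner_ge0. Qed.

Lemma inner_eq0 x : inner x x = 0 -> x = vzero.
Proof.
move=> h; apply: functional_extensionality => i.
have : (x i)^* * x i == 0.
  move/eqP: h; rewrite /inner psumr_eq0 => [/allP/(_ i (mem_index_enum _))/implyP/(_ isT)//|].
  by move=> j _; rewrite mulrC mul_conjC_ge0.
by rewrite mulrC mul_conjC_eq0 => /eqP.
Qed.

Lemma inner_delt_l j x : inner (delt j) x = x j.
Proof.
rewrite /inner /delt (bigD1 j) //= big1 => [|i /negbTE ->]; last by rewrite conjC0 mul0r.
by rewrite eqxx conjC1 mul1r addr0.
Qed.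
Lemma inner_delt_r j x : inner x (delt j) = (x j)^*.
Proof. by rewrite inner_conj inner_delt_l. Qed.

Lemma opapp_delt A j : opapp A (delt j) = fun i => A i j.
Proof.
apply: functional_extensionality => i; rewrite /opapp /delt (bigD1 j) //= big1 => [|k /negbTE ->].
  by rewrite eqxx mulr1 addr0.
by rewrite mulr0.
Qed.

Lemma op_ext A B : (forall x, opapp A x = opapp B x) -> A = B.
Proof.
move=> h; apply: functional_extensionality => i; apply: functional_extensionality => j.
by move: (h (delt j)); rewrite !opapp_delt => /(congr1 (fun f => f i)).
Qed.

Lemma vec_ext x y : (forall z, inner z x = inner z y) -> x = y.
Proof.
move=> h; apply: functional_extensionality => i.
by move: (h (delt i)); rewrite !inner_delt_l.
Qed.

Lemma inner_adj A x y : inner x (opapp A y) = inner (opapp (opadj A) x) y.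
Proof.
rewrite /inner /opapp /opadj.
under eq_bigr do rewrite mulr_sumr.
rewrite exchange_big /=; apply: eq_bigr => j _.
rewrite rmorph_sum mulr_suml; apply: eq_bigr => i _.
by rewrite rmorphM /= conjCK mulrCA mulrA.
Qed.

Lemma inner_adj' A x y : inner (opapp A x) y = inner x (opapp (opadj A) y).
Proof.
by rewrite inner_adj; congr inner; apply: functional_extensionality => i;
   rewrite /opapp /opadj; apply: eq_bigr => j _; rewrite conjCK.
Qed.

Lemma opadjK A : opadj (opadj A) = A.
Proof.
by apply: functional_extensionality => i; apply: functional_extensionality => j;
   rewrite /opadj conjCK.
Qed.

Lemma opapp_mul A B x : opapp (opmul A B) x = opapp A (opapp B x).
Proof.
apply: functional_extensionality => i; rewrite /opapp /opmul.
under eq_bigr do rewrite mulr_suml.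
rewrite exchange_big /=; apply: eq_bigr => j _; rewrite mulr_sumr.
by apply: eq_bigr => k _; rewrite mulrA.
Qed.

Lemma opapp1 x : opapp op1 x = x.
Proof.
apply: functional_extensionality => i; rewrite /opapp /op1 (bigD1 i) //= big1.
  by rewrite eqxx mul1r addr0.
by move=> j; rewrite eq_sym => /negbTE ->; rewrite mul0r.
Qed.

Lemma opmulA A B P : opmul A (opmul B P) = opmul (opmul A B) P.
Proof. by apply: op_ext => x; rewrite !opapp_mul. Qed.
Lemma opmul1l A : opmul op1 A = A.
Proof. by apply: op_ext => x; rewrite !opapp_mul opapp1. Qed.
Lemma opmul1r A : opmul A op1 = A.
Proof. by apply: op_ext => x; rewrite !opapp_mul opapp1. Qed.

Lemma opadj_mul A B : opadj (opmul A B) = opmul (opadj B) (opadj A).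
Proof.
apply: functional_extensionality => i; apply: functional_extensionality => j.
rewrite /opadj /opmul rmorph_sum; apply: eq_bigr => k _; by rewrite rmorphM mulrC.
Qed.

Lemma opapp_lin A x y : opapp A (vadd x y) = vadd (opapp A x) (opapp A y).
Proof.
apply: functional_extensionality => i; rewrite /opapp /vadd -big_split.
by apply: eq_bigr => j _; rewrite mulrDr.
Qed.
Lemma opapp_sub A x y : opapp A (vsub x y) = vsub (opapp A x) (opapp A y).
Proof.
apply: functional_extensionality => i; rewrite /opapp /vsub -sumrB.
by apply: eq_bigr => j _; rewrite mulrBr.
Qed.
Lemma opapp_scale A c x : opapp A (vscale c x) = vscale c (opapp A x).
Proof.
apply: functional_extensionality => i; rewrite /opapp /vscale mulr_sumr.
by apply: eq_bigr => j _; rewrite mulrCA.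
Qed.

Lemma unit_adj_app U x : unitary U -> opapp (opadj U) (opapp U x) = x.
Proof. by case=> h _; rewrite -opapp_mul h opapp1. Qed.
Lemma unit_app_adj U x : unitary U -> opapp U (opapp (opadj U) x) = x.
Proof. by case=> _ h; rewrite -opapp_mul h opapp1. Qed.
Lemma unit_inner U x y : unitary U -> inner (opapp U x) (opapp U y) = inner x y.
Proof. by move=> hU; rewrite inner_adj' unit_adj_app. Qed.
Lemma unit_adj U : unitary U -> unitary (opadj U).
Proof. by case=> h1 h2; split; rewrite opadjK. Qed.

Lemma sq_expand x y :
  inner (vsub x y) (vsub x y) = inner x x - inner x y - inner y x + inner y y.
Proof. rewrite innerBl !innerBr; ring. Qed.

Lemma vsub_eq0 x y : vsub x y = vzero -> x = y.
Proof.
move=> h; apply: functional_extensionality => i.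
by move/(congr1 (fun f => f i)): h; rewrite /vsub /vzero => /eqP; rewrite subr_eq0 => /eqP.
Qed.

Lemma unit_fix U x : unitary U -> inner x (opapp U x) = inner x x -> opapp U x = x.
Proof.
move=> hU h; apply: vsub_eq0; apply: inner_eq0.
rewrite sq_expand unit_inner // (inner_conj x (opapp U x)) h inner_real.
ring.
Qed.

Lemma unit_fix_adj U x : unitary U -> opapp U x = x -> opapp (opadj U) x = x.
Proof. by move=> hU h; rewrite -{1}h unit_adj_app. Qed.

Lemma proj_quad P x : orth_proj P -> inner x (opapp P x) = inner (opapp P x) (opapp P x).
Proof. by case=> h1 h2; rewrite inner_adj' h1 -opapp_mul h2. Qed.

Lemma proj_fix P x : orth_proj P -> inner x (opapp P x) = inner x x -> opapp P x = x.
Proof.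
move=> hP h; apply/esym/vsub_eq0; apply: inner_eq0.
rewrite sq_expand -proj_quad // (inner_conj x (opapp P x)) h inner_real.
ring.
Qed.

Lemma proj_kill P x : orth_proj P -> inner x (opapp P x) = 0 -> opapp P x = vzero.
Proof. by move=> hP h; apply: inner_eq0; rewrite -proj_quad. Qed.

Lemma proj_le P x : orth_proj P -> inner x (opapp P x) <= inner x x.
Proof.
move=> hP; rewrite -subr_ge0.
have := inner_ge0 (vsub x (opapp P x)).
rewrite sq_expand -proj_quad // (inner_conj x (opapp P x)).
have hr : (inner x (opapp P x))^* = inner x (opapp P x) by rewrite proj_quad // inner_real.
rewrite hr.
by have -> : inner x x - inner x (opapp P x) - inner x (opapp P x) + inner x (opapp P x) = inner x x - inner x (opapp P x) by ring.
Qed.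

End Gen.

Section Sums.
Variable C : numClosedFieldType.

Lemma sum_dl (T : finType) (a : T) (F : T -> C) : \sum_x (x == a)%:R * F x = F a.
Proof.
rewrite (bigD1 a) //= eqxx mul1r big1 ?addr0 // => x /negbTE ->; by rewrite mul0r.
Qed.
Lemma sum_dl' (T : finType) (a : T) (F : T -> C) : \sum_x (a == x)%:R * F x = F a.
Proof. by under eq_bigr do rewrite eq_sym; rewrite sum_dl. Qed.
Lemma sum_dr (T : finType) (a : T) (F : T -> C) : \sum_x F x * (x == a)%:R = F a.
Proof. by under eq_bigr do rewrite mulrC; rewrite sum_dl. Qed.
Lemma sum_dr' (T : finType) (a : T) (F : T -> C) : \sum_x F x * (a == x)%:R = F a.
Proof. by under eq_bigr do rewrite mulrC; rewrite sum_dl'. Qed.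

Lemma sum_pair (T1 T2 : finType) (F : T1 * T2 -> C) :
  \sum_(x : T1 * T2) F x = \sum_a \sum_b F (a, b).
Proof. by rewrite pair_big; apply: eq_bigr => -[a b]. Qed.

Lemma sum3 (T : finType) (F : (T * T) * T -> C) :
  \sum_x F x = \sum_a \sum_b \sum_c F ((a, b), c).
Proof.
by rewrite sum_pair sum_pair.
Qed.
End Sums.

Section S3.
Variable C : numClosedFieldType.
Variable T : finType.
Implicit Types (X : T -> T -> T -> C).

Lemma s3_d12 a0 b0 X :
  \sum_a \sum_b \sum_c ((a == a0)%:R * ((b == b0)%:R * X a b c)) = \sum_c X a0 b0 c.
Proof.
under eq_bigr => a _ do under eq_bigr => b _ do rewrite -mulr_sumr.
under eq_bigr => a _ do rewrite -mulr_sumr.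
rewrite sum_dl.
by under eq_bigr => b _ do rewrite -mulr_sumr; rewrite sum_dl.
Qed.
Lemma s3_d13 a0 c0 X :
  \sum_a \sum_b \sum_c ((a == a0)%:R * ((c == c0)%:R * X a b c)) = \sum_b X a0 b c0.
Proof.
under eq_bigr => a _ do under eq_bigr => b _ do rewrite -mulr_sumr sum_dl.
under eq_bigr => a _ do rewrite -mulr_sumr.
by rewrite sum_dl.
Qed.
Lemma s3_d23 b0 c0 X :
  \sum_a \sum_b \sum_c ((b == b0)%:R * ((c == c0)%:R * X a b c)) = \sum_a X a b0 c0.
Proof.
under eq_bigr => a _ do under eq_bigr => b _ do rewrite -mulr_sumr sum_dl.
by under eq_bigr => a _ do rewrite sum_dl.
Qed.
Lemma s3_d3 c0 X :
  \sum_a \sum_b \sum_c ((c == c0)%:R * X a b c) = \sum_a \sum_b X a b c0.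
Proof.
by under eq_bigr => a _ do under eq_bigr => b _ do rewrite sum_dl.
Qed.
Lemma s3_d1 a0 X :
  \sum_a \sum_b \sum_c ((a == a0)%:R * X a b c) = \sum_b \sum_c X a0 b c.
Proof.
under eq_bigr => a _ do under eq_bigr => b _ do rewrite -mulr_sumr.
under eq_bigr => a _ do rewrite -mulr_sumr.
by rewrite sum_dl.
Qed.
Lemma s3_d123 a0 b0 c0 X :
  \sum_a \sum_b \sum_c ((a == a0)%:R * ((b == b0)%:R * ((c == c0)%:R * X a b c))) = X a0 b0 c0.
Proof. by rewrite s3_d12 sum_dl. Qed.
End S3.

Section Rot.
Variable C : numClosedFieldType.

Lemma sum_in1 (A X : finType) (G : A -> X -> C) :
  \sum_a \sum_x G a x = \sum_x \sum_a G a x.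
Proof. exact: exchange_big. Qed.
Lemma sum_in2 (A X Y : finType) (G : A -> X -> Y -> C) :
  \sum_a \sum_x \sum_y G a x y = \sum_x \sum_y \sum_a G a x y.
Proof. rewrite exchange_big; apply: eq_bigr => x _; exact: exchange_big. Qed.
Lemma sum_in3 (A X Y Z : finType) (G : A -> X -> Y -> Z -> C) :
  \sum_a \sum_x \sum_y \sum_z G a x y z = \sum_x \sum_y \sum_z \sum_a G a x y z.
Proof. rewrite exchange_big; apply: eq_bigr => x _; exact: sum_in2. Qed.
Lemma sum_in4 (A X Y Z W : finType) (G : A -> X -> Y -> Z -> W -> C) :
  \sum_a \sum_x \sum_y \sum_z \sum_w G a x y z w = \sum_x \sum_y \sum_z \sum_w \sum_a G a x y z w.
Proof. rewrite exchange_big; apply: eq_bigr => x _; exact: sum_in3. Qed.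
End Rot.

Section Rot2.
Variable C : numClosedFieldType.
Lemma sum_in4x3 (T : finType) (G : T -> T -> T -> T -> T -> T -> T -> C) :
  \sum_i \sum_j \sum_i' \sum_j' \sum_a \sum_b' \sum_b G i j i' j' a b' b =
  \sum_a \sum_b' \sum_b \sum_i \sum_j \sum_i' \sum_j' G i j i' j' a b' b.
Proof.
under eq_bigr do under eq_bigr do under eq_bigr do rewrite sum_in3.
under eq_bigr do under eq_bigr do rewrite sum_in3.
under eq_bigr do rewrite sum_in3.
by rewrite sum_in3.
Qed.
End Rot2.

Section Rot3.
Variable C : numClosedFieldType.
Lemma sum_in5 (A X Y Z W U : finType) (G : A -> X -> Y -> Z -> W -> U -> C) :
  \sum_a \sum_x \sum_y \sum_z \sum_w \sum_u G a x y z w u =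
  \sum_x \sum_y \sum_z \sum_w \sum_u \sum_a G a x y z w u.
Proof. rewrite exchange_big; apply: eq_bigr => x _; exact: sum_in4. Qed.

Lemma sum6_perm (T : finType) (G : T -> T -> T -> T -> T -> T -> C) :
  \sum_i \sum_j \sum_k \sum_l \sum_k' \sum_l' G i j k l k' l' =
  \sum_l \sum_l' \sum_k \sum_k' \sum_i \sum_j G i j k l k' l'.
Proof.
rewrite sum_in5 sum_in5 exchange_big; apply: eq_bigr => l _.
by rewrite sum_in2 sum_in2.
Qed.
End Rot3.

Section Rot4.
Variable C : numClosedFieldType.
Lemma sum3x2 (T : finType) (G : T -> T -> T -> T -> T -> C) :
  \sum_a \sum_b \sum_c \sum_x \sum_y G a b c x y = \sum_x \sum_y \sum_a \sum_b \sum_c G a b c x y.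
Proof.
under eq_bigr do under eq_bigr do rewrite sum_in2.
under eq_bigr do rewrite sum_in2.
by rewrite sum_in2.
Qed.
End Rot4.

Section Pos.
Variable C : numClosedFieldType.
Variable J : finType.
Implicit Types (x y z u v : vec C J) (A B P U M : op C J).

Lemma opapp_opsub A B x : opapp (opsub A B) x = vsub (opapp A x) (opapp B x).
Proof.
apply: functional_extensionality => i; rewrite /opapp /opsub /vsub -sumrB.
by apply: eq_bigr => j _; rewrite mulrBl.
Qed.

Lemma quad_expand A u v t :
  inner (vadd u (vscale t v)) (opapp A (vadd u (vscale t v))) =
  inner u (opapp A u) + t * inner u (opapp A v) + t^* * inner v (opapp A u)
  + t^* * t * inner v (opapp A v).
Proof.
rewrite opapp_lin opapp_scale !innerDl !innerDr !innerZl !innerZr; ring.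
Qed.

Lemma inner_dd A i j : inner (delt C i) (opapp A (delt C j)) = A i j.
Proof. by rewrite opapp_delt inner_delt_l. Qed.

Lemma polar B : (forall x, inner x (opapp B x) = 0) -> forall i j, B i j = 0.
Proof.
move=> h i j.
have h1 := h (vadd (delt C i) (vscale 1 (delt C j))).
have h2 := h (vadd (delt C i) (vscale 'i (delt C j))).
rewrite quad_expand in h1; rewrite quad_expand in h2.
rewrite !(h (delt C i)) !(h (delt C j)) !inner_dd in h1 h2.
rewrite conjC1 !mul1r in h1.
rewrite conjCi in h2.
have e1 : B j i = - B i j by apply/eqP; rewrite -addr_eq0 addrC; apply/eqP;
  move: h1; rewrite add0r addr0 => ->.
rewrite e1 in h2.
move/eqP: h2; rewrite add0r mulr0 addr0.
have -> : 'i * B i j + - 'i * - B i j = (1 + 1) * 'i * B i j by ring.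
rewrite !mulf_eq0 (negbTE (@neq0Ci C)) orbF => /orP[|/eqP //].
by rewrite (_ : (1 + 1 : C) = 2%:R) // pnatr_eq0.
Qed.

Lemma pos_real A x : positive_op A -> (inner x (opapp A x))^* = inner x (opapp A x).
Proof. by move=> hA; rewrite geC0_conj. Qed.

Lemma pos_selfadj A : positive_op A -> opadj A = A.
Proof.
move=> hA.
have h : forall i j, (opsub A (opadj A)) i j = 0.
  apply: polar => x; rewrite opapp_opsub innerBr -inner_adj' (inner_conj x (opapp A x)) pos_real //.
  by rewrite subrr.
apply: functional_extensionality => i; apply: functional_extensionality => j.
by move: (h i j); rewrite /opsub => /eqP; rewrite subr_eq0 => /eqP.
Qed.

Lemma sa_swap A x y : opadj A = A -> inner x (opapp A y) = (inner y (opapp A x))^*.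
Proof. by move=> hA; rewrite -inner_conj inner_adj' hA. Qed.

Lemma psd_cs A x y : positive_op A ->
  inner y (opapp A x) * (inner y (opapp A x))^* <= inner y (opapp A y) * inner x (opapp A x).
Proof.
move=> hA.
have hsa := pos_selfadj hA.
set a := inner x (opapp A x); set N := inner y (opapp A y); set b := inner y (opapp A x).
have ha : 0 <= a by apply: hA.
have hN : 0 <= N by apply: hA.
have hxy : inner x (opapp A y) = b^* by rewrite (sa_swap x y hsa).
have hbb : 0 <= b * b^* by apply: mul_conjC_ge0.
have [a0|apos] := eqVneq a 0.
-
  rewrite a0 mulr0.
  have [b0|bn0] := eqVneq (b * b^*) 0; first by rewrite b0.
  exfalso.
  set m := b * b^* in bn0 hbb *.
  set k := (N + 1) / m.
  have hk0 : 0 <= k by rewrite divr_ge0 // addr_ge0.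
  have hk : k^* = k by rewrite geC0_conj.
  have hkm : k * m = N + 1 by rewrite /k mulfVK.
  set t := - k * b^*.
  have := hA (vadd y (vscale t x)).
  rewrite quad_expand hxy -/a -/N -/b a0 mulr0 addr0.
  have -> : N + t * b + t^* * b^* = N - (N + 1) - (N + 1).
    rewrite /t rmorphM rmorphN /= conjCK hk -hkm /m; ring.
  have -> : N - (N + 1) - (N + 1) = - (N + 2%:R) by ring.
  rewrite oppr_ge0 => h.
  have : 0 < N + 2%:R by rewrite ltr_wpDl.
  by rewrite lt_leAnge h andbF.
-
  have apos' : 0 < a by rewrite lt_def apos ha.
  have := hA (vadd (vscale a y) (vscale (- b^*) x)).
  rewrite quad_expand opapp_scale !innerZl !innerZr hxy -/a -/N -/b (geC0_conj ha).
  rewrite rmorphN /= conjCK.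
  have -> : a * (a * N) + - b^* * (a * b) + - b * (a * b^*) + - b * - b^* * a
           = a * (a * N - b * b^*) by ring.
  rewrite pmulr_rge0 // subr_ge0 => h.
  by rewrite (mulrC N).
Qed.

Lemma psd_tr0 M : positive_op M -> tr M <= 0 -> forall i j, M i j = 0.
Proof.
move=> hM htr.
have hd : forall i, 0 <= M i i by move=> i; rewrite -inner_dd; apply: hM.
have hsum : \sum_i M i i = 0 by apply/eqP; rewrite eq_le htr sumr_ge0.
have hdiag : forall i, M i i = 0.
  move=> i; move/eqP: hsum; rewrite psumr_eq0 // => /allP/(_ i (mem_index_enum _)).
  by move/implyP/(_ isT)/eqP.
move=> i j.
have := psd_cs (delt C j) (delt C i) hM.
rewrite !inner_dd !hdiag mulr0 => h.
have : M i j * (M i j)^* == 0 by rewrite eq_le h mul_conjC_ge0.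
by rewrite mul_conjC_eq0 => /eqP.
Qed.

End Pos.

Section Fam.
Variable C : numClosedFieldType.
Variable J : finType.

Lemma unit_fix_family (U : op C J) (S : finType) (u : S -> vec C J) :
  unitary U -> \sum_s inner (u s) (opapp U (u s)) = \sum_s inner (u s) (u s) ->
  forall s, opapp U (u s) = u s.
Proof.
move=> hU h.
have hsum : \sum_s inner (vsub (opapp U (u s)) (u s)) (vsub (opapp U (u s)) (u s)) = 0.
  under eq_bigr do rewrite sq_expand unit_inner // (inner_conj (u _) (opapp U (u _))).
  rewrite !big_split /= !sumrN -rmorph_sum /= h.
  rewrite geC0_conj; last by apply: sumr_ge0 => s _; apply: inner_ge0.
  ring.
move=> s; apply: vsub_eq0; apply: inner_eq0.
move/eqP: hsum; rewrite psumr_eq0; last by move=> t _; apply: inner_ge0.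
by move/allP/(_ s (mem_index_enum _))/implyP/(_ isT)/eqP.
Qed.
End Fam.

Section More.
Variable C : numClosedFieldType.
Variable J : finType.
Implicit Types (x y z u v : vec C J) (A B P U M : op C J).

Lemma opmul_subl A B P : opmul (opsub A B) P = opsub (opmul A P) (opmul B P).
Proof.
apply: functional_extensionality => i; apply: functional_extensionality => j.
by rewrite /opmul /opsub -sumrB; apply: eq_bigr => k _; rewrite mulrBl.
Qed.
Lemma opmul_subr A B P : opmul P (opsub A B) = opsub (opmul P A) (opmul P B).
Proof.
apply: functional_extensionality => i; apply: functional_extensionality => j.
by rewrite /opmul /opsub -sumrB; apply: eq_bigr => k _; rewrite mulrBr.
Qed.
Lemma opadj_sub A B : opadj (opsub A B) = opsub (opadj A) (opadj B).
Proof.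
by apply: functional_extensionality => i; apply: functional_extensionality => j;
   rewrite /opadj /opsub rmorphB.
Qed.
Lemma tr_sub A B : tr (opsub A B) = tr A - tr B.
Proof. by rewrite /tr /opsub sumrB. Qed.
Lemma tr_comm A B : tr (opmul A B) = tr (opmul B A).
Proof.
rewrite /tr /opmul exchange_big; apply: eq_bigr => i _.
by apply: eq_bigr => j _; rewrite mulrC.
Qed.
Lemma tr_adj_eq0 A : tr (opmul (opadj A) A) = 0 -> forall i j, A i j = 0.
Proof.
move=> h i j.
have hs : forall k, 0 <= \sum_l (A l k)^* * A l k.
  by move=> k; apply: sumr_ge0 => l _; rewrite mulrC mul_conjC_ge0.
move/eqP: h; rewrite /tr /opmul /opadj psumr_eq0 // => /allP/(_ j (mem_index_enum _)).
move/implyP/(_ isT); rewrite psumr_eq0 => [/allP/(_ i (mem_index_enum _))/implyP/(_ isT)|].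
  by rewrite mulrC mul_conjC_eq0 => /eqP.
by move=> l _; rewrite mulrC mul_conjC_ge0.
Qed.
Lemma opsub_eq0 A B : (forall i j, opsub A B i j = 0) -> A = B.
Proof.
move=> h; apply: functional_extensionality => i; apply: functional_extensionality => j.
by move: (h i j); rewrite /opsub => /eqP; rewrite subr_eq0 => /eqP.
Qed.
Lemma opscale_app c A x : opapp (opscale c A) x = vscale c (opapp A x).
Proof.
apply: functional_extensionality => i; rewrite /opapp /opscale /vscale mulr_sumr.
by apply: eq_bigr => j _; rewrite mulrA.
Qed.

Lemma idem_adj P : opmul P P = P ->
  (forall z, opapp (opadj P) (opapp P z) = opapp P z) -> orth_proj P.
Proof.
move=> h1 h2.
have h3 : opmul (opadj P) P = P by apply: op_ext => z; rewrite opapp_mul h2.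
split => //.
by rewrite -{1}h3 opadj_mul opadjK h3.
Qed.

Lemma proj_sub A B : orth_proj A -> orth_proj B -> opmul A B = B -> positive_op (opsub A B).
Proof.
move=> [a1 a2] [b1 b2] hAB.
have hBA : opmul B A = B by rewrite -b1 -a1 -opadj_mul hAB.
have hP : orth_proj (opsub A B).
  split; first by rewrite opadj_sub a1 b1.
  by rewrite opmul_subl !opmul_subr a2 hAB hBA b2; apply: opsub_eq0 => i j;
     rewrite /opsub; ring.
move=> x; rewrite proj_quad //; exact: inner_ge0.
Qed.

Lemma unit_re U u : unitary U -> (inner u (opapp U u))^* = inner u (opapp U u) ->
  inner u (opapp U u) <= inner u u.
Proof.
move=> hU hr.
have := inner_ge0 (vsub (opapp U u) u).
rewrite sq_expand unit_inner // (inner_conj u (opapp U u)) hr.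
have -> : inner u u - inner u (opapp U u) - inner u (opapp U u) + inner u u
   = (1 + 1) * (inner u u - inner u (opapp U u)) by ring.
by rewrite pmulr_rge0 ?subr_ge0 // (_ : (1 + 1 : C) = 2%:R) // ltr0n.
Qed.

End More.

Section Conj.
Variable C : numClosedFieldType.
Variable J : finType.
Lemma conj_proj (U P : op C J) : unitary U -> orth_proj P ->
  orth_proj (opmul (opmul U P) (opadj U)).
Proof.
move=> [u1 u2] [p1 p2]; split.
  by rewrite !opadj_mul opadjK p1 opmulA.
rewrite -!opmulA (opmulA (opadj U)) u1 opmul1l.
by rewrite (opmulA P) p2.
Qed.
End Conj.

Section Legs.
Variable C : numClosedFieldType.

Lemma natr_and (b1 b2 : bool) : ((b1 && b2)%:R : C) = b1%:R * b2%:R.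
Proof. by case: b1; case: b2; rewrite ?mul1r ?mul0r. Qed.

Lemma op1_pair (I J : finType) (a : I * J) b :
  (op1 a b : C) = (a.1 == b.1)%:R * (a.2 == b.2)%:R.
Proof. by case: a => a1 a2; case: b => b1 b2; rewrite /op1 /= xpair_eqE natr_and. Qed.

Lemma opadj_tens (I J : finType) (A : op C I) (B : op C J) :
  opadj (optens A B) = optens (opadj A) (opadj B).
Proof.
by apply: functional_extensionality => x; apply: functional_extensionality => y;
   rewrite /opadj /optens rmorphM.
Qed.

Lemma opmul_tens (I J : finType) (A A' : op C I) (B B' : op C J) :
  opmul (optens A B) (optens A' B') = optens (opmul A A') (opmul B B').
Proof.
apply: functional_extensionality => x; apply: functional_extensionality => y.
rewrite /opmul /optens sum_pair big_distrlr /=; apply: eq_bigr => a _.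
by apply: eq_bigr => b _; ring.
Qed.

Lemma optens11 (I J : finType) : optens (@op1 C I) (@op1 C J) = op1.
Proof.
by apply: functional_extensionality => x; apply: functional_extensionality => y;
   rewrite op1_pair.
Qed.

Lemma unitary_tens (I J : finType) (A : op C I) (B : op C J) :
  unitary A -> unitary B -> unitary (optens A B).
Proof.
move=> [hA1 hA2] [hB1 hB2].
by split; rewrite opadj_tens opmul_tens ?hA1 ?hB1 ?hA2 ?hB2 optens11.
Qed.

Lemma unitary1 (I : finType) : unitary (@op1 C I).
Proof.
have h : opadj (@op1 C I) = op1.
  by apply: functional_extensionality => x; apply: functional_extensionality => y;
     rewrite /opadj /op1 eq_sym; case: (_ == _); rewrite ?conjC1 ?conjC0.
by split; rewrite h opmul1l.
Qed.

Definition reidx (J K : finType) (phi : J -> K) (M : op C K) : op C J :=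
  fun a b => M (phi a) (phi b).

Lemma reidx_mul (J K : finType) (phi : J -> K) (M M' : op C K) :
  bijective phi -> opmul (reidx phi M) (reidx phi M') = reidx phi (opmul M M').
Proof.
move=> hb; apply: functional_extensionality => a; apply: functional_extensionality => b.
rewrite /opmul /reidx (reindex phi) //; exact: onW_bij.
Qed.

Lemma reidx_adj (J K : finType) (phi : J -> K) (M : op C K) :
  opadj (reidx phi M) = reidx phi (opadj M).
Proof. by []. Qed.

Lemma reidx_1 (J K : finType) (phi : J -> K) :
  injective phi -> reidx phi (@op1 C K) = op1.
Proof.
move=> hi; apply: functional_extensionality => a; apply: functional_extensionality => b.
by rewrite /reidx /op1 (inj_eq hi).
Qed.

Lemma unitary_reidx (J K : finType) (phi : J -> K) (M : op C K) :
  bijective phi -> unitary M -> unitary (reidx phi M).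
Proof.
move=> hb [h1 h2]; have hi := bij_inj hb.
by split; rewrite reidx_adj reidx_mul // ?h1 ?h2 reidx_1.
Qed.

Variable I : finType.
Definition assoc3 (x : ((I * I) * I)%type) : (I * (I * I))%type := (x.1.1, (x.1.2, x.2)).
Definition unassoc3 (x : (I * (I * I))%type) : ((I * I) * I)%type := ((x.1, x.2.1), x.2.2).
Definition swap3 (x : ((I * I) * I)%type) : ((I * I) * I)%type := ((x.1.1, x.2), x.1.2).

Lemma assoc3_bij : bijective assoc3.
Proof. by exists unassoc3 => [[[a b] c]|[a [b c]]]. Qed.
Lemma swap3_bij : bijective swap3.
Proof. by exists swap3 => [[[a b] c]|[[a b] c]]. Qed.

Lemma leg23E (V : op C (I * I)%type) : leg23 V = reidx assoc3 (optens op1 V).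
Proof. by []. Qed.
Lemma leg13E (V : op C (I * I)%type) : leg13 V = reidx swap3 (optens V op1).
Proof. by []. Qed.

Lemma leg12_unitary (V : op C (I * I)%type) : unitary V -> unitary (leg12 V).
Proof. by move=> hV; apply: unitary_tens => //; apply: unitary1. Qed.
Lemma leg23_unitary (V : op C (I * I)%type) : unitary V -> unitary (leg23 V).
Proof.
move=> hV; rewrite leg23E; apply: unitary_reidx; first exact: assoc3_bij.
by apply: unitary_tens => //; apply: unitary1.
Qed.
Lemma leg13_unitary (V : op C (I * I)%type) : unitary V -> unitary (leg13 V).
Proof.
move=> hV; rewrite leg13E; apply: unitary_reidx; first exact: swap3_bij.
by apply: unitary_tens => //; apply: unitary1.
Qed.

End Legs.

Section VT.
Variable C : numClosedFieldType.
Lemma inner_vtens (J1 J2 : finType) (x x' : vec C J1) (y y' : vec C J2) :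
  inner (vtens x y) (vtens x' y') = inner x x' * inner y y'.
Proof.
rewrite /inner /vtens sum_pair big_distrlr /=; apply: eq_bigr => a _.
by apply: eq_bigr => b _; rewrite rmorphM /=; ring.
Qed.
Lemma inner_delt (J : finType) (l : J) : inner (delt C l) (delt C l) = 1.
Proof. by rewrite inner_delt_l /delt eqxx. Qed.
End VT.

Section VT2.
Variable C : numClosedFieldType.
Variables J1 J2 : finType.
Lemma opapp_tens (A : op C J1) (B : op C J2) x y :
  opapp (optens A B) (vtens x y) = vtens (opapp A x) (opapp B y).
Proof.
apply: functional_extensionality => -[i k].
rewrite /opapp /optens /vtens sum_pair big_distrlr /=; apply: eq_bigr => a _.
by apply: eq_bigr => b _; ring.
Qed.
Lemma vtens_addl (x x' : vec C J1) (y : vec C J2) :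
  vtens (vadd x x') y = vadd (vtens x y) (vtens x' y).
Proof. by apply: functional_extensionality => -[i k]; rewrite /vtens /vadd mulrDl. Qed.
Lemma vtens_addr (x : vec C J1) (y y' : vec C J2) :
  vtens x (vadd y y') = vadd (vtens x y) (vtens x y').
Proof. by apply: functional_extensionality => -[i k]; rewrite /vtens /vadd mulrDr. Qed.
Lemma vtens_scale (a b : C) (x : vec C J1) (y : vec C J2) :
  vtens (vscale a x) (vscale b y) = vscale (a * b) (vtens x y).
Proof. by apply: functional_extensionality => -[i k]; rewrite /vtens /vscale; ring. Qed.
Lemma vtens_delt (j : J1) (l : J2) : vtens (delt C j) (delt C l) = delt C (j,l).
Proof.
apply: functional_extensionality => -[i k]; rewrite /vtens /delt xpair_eqE.
by case: (i == j); case: (k == l); rewrite ?mul1r ?mul0r.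
Qed.
Lemma op_ext_tens (A B : op C (J1 * J2)%type) :
  (forall x y, opapp A (vtens x y) = opapp B (vtens x y)) -> A = B.
Proof.
move=> h; apply: op_ext => z.
have hz : z = fun s => \sum_j \sum_l z (j,l) * vtens (delt C j) (delt C l) s.
  apply: functional_extensionality => -[i k].
  under eq_bigr do under eq_bigr do rewrite vtens_delt /delt mulrC.
  rewrite (eq_bigr (fun j => (j == i)%:R * z (j,k))) ?sum_dl // => j _.
  transitivity (\sum_l ((j,l) == (i,k))%:R * z (j,l)); first by apply: eq_bigr => l _; rewrite eq_sym.
  transitivity (\sum_l (j == i)%:R * ((l == k)%:R * z (j,l))); last by rewrite -mulr_sumr sum_dl.
  by apply: eq_bigr => l _; rewrite xpair_eqE natr_and mulrA.
have lin : forall M : op C (J1 * J2)%type,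
    opapp M z = fun s => \sum_j \sum_l z (j,l) * opapp M (vtens (delt C j) (delt C l)) s.
  move=> M; rewrite {1}hz; apply: functional_extensionality => s.
  rewrite /opapp.
  under eq_bigr do rewrite mulr_sumr.
  rewrite exchange_big; apply: eq_bigr => j _.
  under eq_bigr do rewrite mulr_sumr.
  rewrite exchange_big; apply: eq_bigr => l _.
  by rewrite mulr_sumr; apply: eq_bigr => t _; ring.
by rewrite !lin; apply: functional_extensionality => s;
   apply: eq_bigr => j _; apply: eq_bigr => l _; rewrite h.
Qed.
Lemma proj_tens (A : op C J1) (B : op C J2) : orth_proj A -> orth_proj B -> orth_proj (optens A B).
Proof. by move=> [a1 a2] [b1 b2]; split; rewrite ?opadj_tens ?opmul_tens ?a1 ?b1 ?a2 ?b2. Qed.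
End VT2.
Lemma proj1 (C : numClosedFieldType) (J : finType) : orth_proj (@op1 C J).
Proof. by have [h1 h2] := unitary1 C J; split; [rewrite -{2}h1 opmul1r | rewrite opmul1l]. Qed.

Section Pent.
Variable C : numClosedFieldType.
Variable I : finType.
Variable V : op C (I * I)%type.
Hypothesis hMU : multiplicative_unitary V.

Let hU : unitary V := hMU.1.

Lemma P3op : opmul (leg13 V) (leg23 V) = opmul (opmul (opadj (leg12 V)) (leg23 V)) (leg12 V).
Proof.
have u12 := leg12_unitary hU.
have e1 : opmul (leg13 V) (leg23 V) =
  opmul (opmul (opadj (leg12 V)) (leg12 V)) (opmul (leg13 V) (leg23 V)) by rewrite u12.1 opmul1l.
rewrite e1 -(opmulA (opadj (leg12 V)) (leg12 V)) (opmulA (leg12 V) (leg13 V)) hMU.2.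
by rewrite opmulA.
Qed.

Lemma P2op : opmul (leg12 V) (leg13 V) = opmul (opmul (leg23 V) (leg12 V)) (opadj (leg23 V)).
Proof.
have u23 := leg23_unitary hU.
have e2 : opmul (leg12 V) (leg13 V) =
  opmul (opmul (leg12 V) (leg13 V)) (opmul (leg23 V) (opadj (leg23 V))) by rewrite u23.2 opmul1r.
by rewrite e2 opmulA hMU.2.
Qed.

Lemma E13_23 i i' k j j' l :
  opmul (leg13 V) (leg23 V) ((i,i'),k) ((j,j'),l) = \sum_m V (i,k) (j,m) * V (i',m) (j',l).
Proof.
rewrite /opmul /leg13 /leg23 sum3 /=.
transitivity (\sum_a \sum_b \sum_c ((a == j)%:R * ((b == i')%:R *
                 (V (i,k) (a,c) * V (b,c) (j',l))))); last by rewrite s3_d12.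
apply: eq_bigr => a _; apply: eq_bigr => b _; apply: eq_bigr => c _.
rewrite (eq_sym i' b); ring.
Qed.

Lemma Eadj12_23 i i' k a b' c :
  opmul (opadj (leg12 V)) (leg23 V) ((i,i'),k) ((a,b'),c) =
  \sum_b (V (a,b) (i,i'))^* * V (b,k) (b',c).
Proof.
rewrite /opmul /opadj /leg12 /leg23 /optens sum3 /=.
transitivity (\sum_a1 \sum_b1 \sum_c1 ((a1 == a)%:R * ((c1 == k)%:R *
                 ((V (a1,b1) (i,i'))^* * V (b1,c1) (b',c))))); last by rewrite s3_d13.
apply: eq_bigr => a1 _; apply: eq_bigr => b1 _; apply: eq_bigr => c1 _.
rewrite /op1 /= rmorphM /= rmorph_nat; ring.
Qed.

Lemma EM_12 (M : op C ((I * I) * I)%type) u j j' l :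
  opmul M (leg12 V) u ((j,j'),l) = \sum_a \sum_b M u ((a,b),l) * V (a,b) (j,j').
Proof.
rewrite /opmul /leg12 /optens sum3 /=.
transitivity (\sum_a \sum_b \sum_c ((c == l)%:R * (M u ((a,b),c) * V (a,b) (j,j'))));
  last by rewrite s3_d3.
apply: eq_bigr => a _; apply: eq_bigr => b _; apply: eq_bigr => c _.
rewrite /op1 /=; ring.
Qed.

Lemma P3s i i' k j j' l :
  \sum_m V (i,k) (j,m) * V (i',m) (j',l) =
  \sum_a \sum_b' (\sum_b (V (a,b) (i,i'))^* * V (b,k) (b',l)) * V (a,b') (j,j').
Proof.
rewrite -E13_23 P3op EM_12.
by apply: eq_bigr => a _; apply: eq_bigr => b' _; rewrite Eadj12_23.
Qed.

Lemma E12_13 i k k' j l l' :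
  opmul (leg12 V) (leg13 V) ((i,k),k') ((j,l),l') = \sum_m V (i,k) (m,l) * V (m,k') (j,l').
Proof.
rewrite /opmul /leg12 /leg13 /optens sum3 /=.
transitivity (\sum_a \sum_b \sum_c ((b == l)%:R * ((c == k')%:R *
                 (V (i,k) (a,b) * V (a,c) (j,l'))))); last by rewrite s3_d23.
apply: eq_bigr => a _; apply: eq_bigr => b _; apply: eq_bigr => c _.
rewrite /op1 /= (eq_sym k' c); ring.
Qed.

Lemma E23_12 i k k' y :
  opmul (leg23 V) (leg12 V) ((i,k),k') y = \sum_b V (k,k') (b,y.2) * V (i,b) y.1.
Proof.
rewrite /opmul /leg12 /leg23 /optens sum3 /=.
transitivity (\sum_a \sum_b \sum_c ((a == i)%:R * ((c == y.2)%:R *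
                 (V (k,k') (b,c) * V (a,b) y.1)))); last first.
  by rewrite s3_d13; apply: eq_bigr => b _; case: y => [[y1 y2] y3].
apply: eq_bigr => a _; apply: eq_bigr => b _; apply: eq_bigr => c _.
case: y => [[y1 y2] y3] /=; rewrite /op1 /= (eq_sym i a); ring.
Qed.

Lemma EM_adj23 (M : op C ((I * I) * I)%type) u j l l' :
  opmul M (opadj (leg23 V)) u ((j,l),l') = \sum_b' \sum_c M u ((j,b'),c) * (V (l,l') (b',c))^*.
Proof.
rewrite /opmul /opadj /leg23 sum3 /=.
transitivity (\sum_a \sum_b \sum_c ((a == j)%:R * (M u ((a,b),c) * (V (l,l') (b,c))^*)));
  last by rewrite s3_d1.
apply: eq_bigr => a _; apply: eq_bigr => b _; apply: eq_bigr => c _.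
rewrite rmorphM /= rmorph_nat (eq_sym j a); ring.
Qed.

Lemma P2s i k k' j l l' :
  \sum_m V (i,k) (m,l) * V (m,k') (j,l') =
  \sum_b' \sum_c (\sum_b V (k,k') (b,c) * V (i,b) (j,b')) * (V (l,l') (b',c))^*.
Proof.
rewrite -E12_13 P2op EM_adj23.
by apply: eq_bigr => b' _; apply: eq_bigr => c _; rewrite E23_12.
Qed.

Lemma U1s i k j l :
  \sum_a \sum_b (V (a,b) (i,k))^* * V (a,b) (j,l) = ((i == j) && (k == l))%:R.
Proof.
have := congr1 (fun M => M (i,k) (j,l)) hU.1.
by rewrite /opmul /opadj /op1 sum_pair /= xpair_eqE.
Qed.

Lemma U2s i k j l :
  \sum_a \sum_b V (i,k) (a,b) * (V (j,l) (a,b))^* = ((i == j) && (k == l))%:R.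
Proof.
have := congr1 (fun M => M (i,k) (j,l)) hU.2.
by rewrite /opmul /opadj /op1 sum_pair /= xpair_eqE.
Qed.

End Pent.

Section Main.
Variable C : numClosedFieldType.
Variable I : finType.
Variable V : op C (I * I)%type.
Variable e : vec C I.
Hypothesis hMU : multiplicative_unitary V.
Hypothesis hmult : forall xi : vec C I, fixed_vector V xi -> exists c : C, xi = vscale c e.
Hypothesis hfix : fixed_vector V e.
Hypothesis he1 : inner e e = 1.

Let hU : unitary V := hMU.1.

Lemma Fs i k l : \sum_j V (i,k) (j,l) * e j = (k == l)%:R * e i.
Proof.
have := congr1 (fun v => v (i,k)) (hfix (delt C l)).
rewrite /opapp /vtens /delt sum_pair /= => h.
rewrite mulrC -h; apply: eq_bigr => a _.
transitivity (\sum_b V (i,k) (a,b) * e a * (b == l)%:R); first by rewrite sum_dr.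
by apply: eq_bigr => b _; ring.
Qed.

Lemma Fs' j l k : \sum_i (V (i,k) (j,l))^* * e i = (l == k)%:R * e j.
Proof.
have hv : opapp (opadj V) (vtens e (delt C k)) = vtens e (delt C k).
  by apply: unit_fix_adj => //; apply: hfix.
have := congr1 (fun v => v (j,l)) hv.
rewrite /opapp /opadj /vtens /delt sum_pair /= => h.
rewrite mulrC -h; apply: eq_bigr => a _.
transitivity (\sum_b (V (a,b) (j,l))^* * e a * (b == k)%:R); first by rewrite sum_dr.
by apply: eq_bigr => b _; ring.
Qed.

Lemma Fs'c k b c : \sum_a (e a)^* * V (a,k) (b,c) = (c == k)%:R * (e b)^*.
Proof.
have := congr1 (@Num.conj C) (Fs' b c k).
rewrite rmorph_sum rmorphM /= rmorph_nat => <-.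
by apply: eq_bigr => a _; rewrite rmorphM /= conjCK mulrC.
Qed.

Lemma multS (xi : vec C I) :
  (forall i k l, \sum_j V (i,k) (j,l) * xi j = (k == l)%:R * xi i) ->
  exists c, xi = vscale c e.
Proof.
move=> h; apply: hmult => eta.
apply: functional_extensionality => -[i k].
rewrite /opapp /vtens sum_pair /= exchange_big /=.
transitivity (\sum_b (\sum_a V (i,k) (a,b) * xi a) * eta b).
  by apply: eq_bigr => b _; rewrite mulr_suml; apply: eq_bigr => a _; ring.
under eq_bigr do rewrite h.
rewrite (bigD1 k) //= eqxx mul1r big1 ?addr0 // => b /negbTE.
by rewrite eq_sym => ->; rewrite mul0r mul0r.
Qed.

Definition R0m i j := \sum_k \sum_l (e k)^* * V (i,k) (j,l) * e l.

Lemma R0hom i j k l : \sum_m R0m i m * V (m,k) (j,l) = (k == l)%:R * R0m i j.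
Proof.
rewrite /R0m.
transitivity (\sum_a \sum_b (e a)^* * e b * \sum_m V (i,a) (m,b) * V (m,k) (j,l)).
  under eq_bigr do rewrite mulr_suml.
  rewrite sum_in1; apply: eq_bigr => a _.
  under eq_bigr do rewrite mulr_suml.
  rewrite sum_in1; apply: eq_bigr => b _.
  by rewrite mulr_sumr; apply: eq_bigr => m _; ring.
under eq_bigr do under eq_bigr do rewrite P2s //.
transitivity (\sum_a \sum_b \sum_b' \sum_c \sum_b1
   ((e a)^* * V (a,k) (b1,c)) * (e b * (V (b,l) (b',c))^*) * V (i,b1) (j,b')).
  apply: eq_bigr => a _; apply: eq_bigr => b _.
  rewrite mulr_sumr; apply: eq_bigr => b' _.
  rewrite mulr_sumr; apply: eq_bigr => c _.
  rewrite big_distrl big_distrr /=; apply: eq_bigr => b1 _; ring.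
under eq_bigr do rewrite sum_in3.
rewrite sum_in4.
transitivity (\sum_b' \sum_c \sum_b1 ((c == k)%:R * (e b1)^*) * ((c == l)%:R * e b') * V (i,b1) (j,b')).
  apply: eq_bigr => b' _; apply: eq_bigr => c _; apply: eq_bigr => b1 _.
  rewrite -Fs'c -(Fs' b' c l) mulr_sumr.
  rewrite mulr_suml; apply: eq_bigr => w _; rewrite -mulrA mulr_suml.
  by apply: eq_bigr => a _; ring.
transitivity (\sum_b' \sum_b1 \sum_c (c == k)%:R * ((c == l)%:R * ((e b1)^* * V (i,b1) (j,b') * e b'))).
  apply: eq_bigr => b' _; rewrite exchange_big; apply: eq_bigr => b1 _.
  by apply: eq_bigr => c _; ring.
under eq_bigr do under eq_bigr do rewrite sum_dl.
rewrite exchange_big mulr_sumr; apply: eq_bigr => b1 _.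
by rewrite mulr_sumr; apply: eq_bigr => b' _.
Qed.

Lemma multS_adj (u : vec C I) :
  (forall k j l, \sum_m (V (m,k) (j,l))^* * u m = (k == l)%:R * u j) ->
  exists c, u = vscale c e.
Proof.
move=> h; apply: multS => i0 k0 k.
have hv : opapp (opadj V) (vtens u (delt C k)) = vtens u (delt C k).
  apply: functional_extensionality => -[j l].
  rewrite /opapp /opadj /vtens /delt sum_pair /=.
  transitivity (\sum_m (V (m,k) (j,l))^* * u m).
    apply: eq_bigr => m _.
    transitivity (\sum_b (V (m,b) (j,l))^* * u m * (b == k)%:R); last by rewrite sum_dr.
    by apply: eq_bigr => b _; ring.
  by rewrite h eq_sym mulrC.
have hv2 : opapp V (vtens u (delt C k)) = vtens u (delt C k).
  by rewrite -{1}hv unit_app_adj.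
have := congr1 (fun v => v (i0,k0)) hv2.
rewrite /opapp /vtens /delt sum_pair /= => h2.
rewrite mulrC -h2; apply: eq_bigr => a _.
transitivity (\sum_b V (i0,k0) (a,b) * u a * (b == k)%:R); first by rewrite sum_dr.
by apply: eq_bigr => b _; ring.
Qed.

Lemma R0e i : \sum_j R0m i j * e j = e i.
Proof.
rewrite /R0m.
transitivity (\sum_k \sum_l (e k)^* * e l * \sum_j V (i,k) (j,l) * e j).
  under eq_bigr do rewrite mulr_suml.
  rewrite sum_in1; apply: eq_bigr => k _.
  under eq_bigr do rewrite mulr_suml.
  rewrite sum_in1; apply: eq_bigr => l _.
  by rewrite mulr_sumr; apply: eq_bigr => m _; ring.
under eq_bigr do under eq_bigr do rewrite Fs.
transitivity (\sum_k \sum_l (k == l)%:R * ((e k)^* * e l * e i)).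
  by apply: eq_bigr => k _; apply: eq_bigr => l _; ring.
under eq_bigr do rewrite sum_dl'.
rewrite -mulr_suml.
have -> : \sum_k (e k)^* * e k = 1 by exact: he1.
by rewrite mul1r.
Qed.

Lemma R0E i j : R0m i j = e i * (e j)^*.
Proof.
have [c hc] : exists c, (fun j => (R0m i j)^*) = vscale c e.
  apply: multS_adj => k j0 l.
  have := congr1 (@Num.conj C) (R0hom i j0 k l).
  rewrite rmorph_sum rmorphM /= rmorph_nat => <-.
  by apply: eq_bigr => m _; rewrite rmorphM /= mulrC.
have hR : forall j, R0m i j = c^* * (e j)^*.
  move=> j0; have := congr1 (fun f => (f j0)^*) hc; rewrite /vscale /= conjCK => ->.
  by rewrite rmorphM.
have := R0e i; under eq_bigr do rewrite hR.
move=> h.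
have hc' : c^* = e i.
  rewrite -h -[LHS]mulr1 -he1 /inner mulr_sumr; apply: eq_bigr => k _; ring.
by rewrite hR hc'.
Qed.

Definition Tm i j := \sum_k V (i,k) (j,k).
Definition Tp k l := \sum_i V (i,k) (i,l).
Let n : C := #|I|%:R.

Lemma sum_const_n (x : C) : \sum_(c : I) x = n * x.
Proof. by rewrite sumr_const /n mulr_natl. Qed.

Lemma T1 i j : \sum_m Tm i m * Tm m j = n * Tm i j.
Proof.
rewrite /Tm.
transitivity (\sum_k \sum_k' \sum_m V (i,k) (m,k) * V (m,k') (j,k')).
  under eq_bigr do rewrite mulr_suml.
  rewrite sum_in1; apply: eq_bigr => k _.
  under eq_bigr do rewrite mulr_sumr.
  by rewrite sum_in1.
under eq_bigr do under eq_bigr do rewrite P2s //.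
transitivity (\sum_k \sum_k' \sum_b' \sum_c \sum_b
   (V (k,k') (b',c))^* * V (k,k') (b,c) * V (i,b) (j,b')).
  apply: eq_bigr => k _; apply: eq_bigr => k' _; apply: eq_bigr => b' _.
  apply: eq_bigr => c _; rewrite mulr_suml; apply: eq_bigr => b _; ring.
under eq_bigr do rewrite sum_in3.
rewrite sum_in3.
transitivity (\sum_b' \sum_(c : I) \sum_b ((b' == b) && (c == c))%:R * V (i,b) (j,b')).
  apply: eq_bigr => b' _; apply: eq_bigr => c _; apply: eq_bigr => b _.
  by rewrite -(U1s hMU) mulr_suml; apply: eq_bigr => k _; rewrite mulr_suml.
transitivity (\sum_(c : I) \sum_b' \sum_b (b' == b)%:R * V (i,b) (j,b')).
  rewrite exchange_big; apply: eq_bigr => c _; apply: eq_bigr => b' _.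
  by apply: eq_bigr => b _; rewrite eqxx andbT.
rewrite sum_const_n; congr (_ * _).
rewrite exchange_big; apply: eq_bigr => b _.
by rewrite sum_dl.
Qed.

Lemma Tp1 k l : \sum_m Tp k m * Tp m l = n * Tp k l.
Proof.
rewrite /Tp.
transitivity (\sum_i \sum_i' \sum_m V (i,k) (i,m) * V (i',m) (i',l)).
  under eq_bigr do rewrite mulr_suml.
  rewrite sum_in1; apply: eq_bigr => i _.
  under eq_bigr do rewrite mulr_sumr.
  by rewrite sum_in1.
under eq_bigr do under eq_bigr do rewrite P3s //.
transitivity (\sum_i \sum_i' \sum_a \sum_b' \sum_b
   V (a,b') (i,i') * (V (a,b) (i,i'))^* * V (b,k) (b',l)).
  apply: eq_bigr => i _; apply: eq_bigr => i' _; apply: eq_bigr => a _.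
  apply: eq_bigr => b' _; rewrite mulr_suml; apply: eq_bigr => b _; ring.
under eq_bigr do rewrite sum_in3.
rewrite sum_in3.
transitivity (\sum_(a : I) \sum_b' \sum_b ((a == a) && (b' == b))%:R * V (b,k) (b',l)).
  apply: eq_bigr => a _; apply: eq_bigr => b' _; apply: eq_bigr => b _.
  by rewrite -(U2s hMU) mulr_suml; apply: eq_bigr => i _; rewrite mulr_suml.
transitivity (\sum_(a : I) \sum_b V (b,k) (b,l)); last by rewrite sum_const_n.
apply: eq_bigr => a _.
transitivity (\sum_b' \sum_b (b' == b)%:R * V (b,k) (b',l)).
  by apply: eq_bigr => b' _; apply: eq_bigr => b _; rewrite eqxx.
rewrite exchange_big; apply: eq_bigr => b _.
by rewrite sum_dl.
Qed.

Lemma quadV_r (x y : vec C I) l l' :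
  inner (vtens x (delt C l)) (opapp V (vtens y (delt C l'))) =
  \sum_a \sum_a' (x a)^* * V (a,l) (a',l') * y a'.
Proof.
rewrite /inner /opapp /vtens /delt !sum_pair.
transitivity (\sum_a \sum_b (b == l)%:R * ((x a)^* *
   \sum_a' \sum_b' V (a,b) (a',b') * y a' * (b' == l')%:R)).
  apply: eq_bigr => a _; apply: eq_bigr => b _.
  rewrite rmorphM /= rmorph_nat sum_pair; under [in RHS]eq_bigr do under eq_bigr do rewrite -mulrA.
  by rewrite /=; ring.
under eq_bigr do rewrite sum_dl.
apply: eq_bigr => a _; rewrite mulr_sumr; apply: eq_bigr => a' _.
by rewrite sum_dr mulrA.
Qed.

Lemma quadV_l (x y : vec C I) j j' :
  inner (vtens (delt C j) x) (opapp V (vtens (delt C j') y)) =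
  \sum_b \sum_b' (x b)^* * V (j,b) (j',b') * y b'.
Proof.
rewrite /inner /opapp /vtens /delt !sum_pair.
transitivity (\sum_a \sum_b (a == j)%:R * ((x b)^* *
   \sum_a' \sum_b' (a' == j')%:R * (V (a,b) (a',b') * y b'))).
  apply: eq_bigr => a _; apply: eq_bigr => b _.
  rewrite rmorphM /= rmorph_nat sum_pair -mulrA; congr (_ * (_ * _)).
  by apply: eq_bigr => a' _; apply: eq_bigr => b' _; ring.
under eq_bigr do rewrite -mulr_sumr.
rewrite sum_dl; apply: eq_bigr => b _.
under eq_bigr do rewrite -mulr_sumr.
by rewrite sum_dl mulr_sumr; apply: eq_bigr => b' _; rewrite mulrA.
Qed.

Lemma T2 j l : opapp V (vtens (fun a => Tm a j) (delt C l)) = vtens (fun a => Tm a j) (delt C l).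
Proof.
apply: (unit_fix_family (u := fun s : I * I => vtens (fun a => Tm a s.1) (delt C s.2)) hU _ (j,l)).
rewrite !sum_pair.
under eq_bigr do under eq_bigr do rewrite quadV_r.
under [in RHS]eq_bigr do under eq_bigr do rewrite inner_vtens inner_delt mulr1.
apply: eq_bigr => j0 _.
transitivity (\sum_(i : I) \sum_a \sum_a' (Tm a j0)^* * V (a,i) (a',i) * Tm a' j0); first by [].
transitivity (\sum_(i : I) inner (fun a => Tm a j0) (fun a => Tm a j0)); last by [].
rewrite sum_const_n.
transitivity (\sum_a \sum_a' (Tm a j0)^* * (\sum_l0 V (a,l0) (a',l0)) * Tm a' j0).
  rewrite sum_in2; apply: eq_bigr => a _; apply: eq_bigr => a' _.
  by rewrite -mulr_suml -mulr_sumr.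
rewrite /inner mulr_sumr; apply: eq_bigr => a _.
rewrite mulrCA -T1 mulr_sumr; apply: eq_bigr => a' _.
by rewrite /Tm; ring.
Qed.

Lemma T3 a j : Tm a j = n * e a * (e j)^*.
Proof.
have [c hc] : exists c, (fun a => Tm a j) = vscale c e.
  apply: multS => i k l.
  have := congr1 (fun v => v (i,k)) (T2 j l).
  rewrite /opapp /vtens /delt sum_pair /= => h.
  rewrite mulrC -h; apply: eq_bigr => a0 _.
  transitivity (\sum_b V (i,k) (a0,b) * Tm a0 j * (b == l)%:R); first by rewrite sum_dr.
  by apply: eq_bigr => b _; ring.
have hT : forall a, Tm a j = c * e a by move=> a0; move/(congr1 (fun f => f a0)): hc.
have hce : \sum_a (e a)^* * Tm a j = n * (e j)^*.
  rewrite /Tm; under eq_bigr do rewrite mulr_sumr.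
  rewrite exchange_big /=.
  under eq_bigr do rewrite Fs'c eqxx mul1r.
  by rewrite sum_const_n.
have hcc : c = n * (e j)^*.
  rewrite -hce; under eq_bigr do rewrite hT.
  by rewrite -[LHS]mulr1 -he1 /inner mulr_sumr; apply: eq_bigr => k _; ring.
by rewrite hT hcc; ring.
Qed.

Lemma Tp2 j l : opapp V (vtens (delt C j) (fun m => Tp m l)) = vtens (delt C j) (fun m => Tp m l).
Proof.
apply: (unit_fix_family (u := fun s : I * I => vtens (delt C s.1) (fun m => Tp m s.2)) hU _ (j,l)).
rewrite !sum_pair.
under eq_bigr do under eq_bigr do rewrite quadV_l.
under [in RHS]eq_bigr do under eq_bigr do rewrite inner_vtens inner_delt mul1r.
transitivity (\sum_(j0 : I) \sum_(l0 : I) \sum_b \sum_b' (Tp b l0)^* * V (j0,b) (j0,b') * Tp b' l0);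
  first by [].
transitivity (\sum_(j0 : I) \sum_(l0 : I) inner (fun m => Tp m l0) (fun m => Tp m l0)); last by [].
rewrite [LHS]exchange_big [RHS]exchange_big; apply: eq_bigr => l0 _.
rewrite sum_const_n sum_in2.
transitivity (\sum_b \sum_b' (Tp b l0)^* * (\sum_j0 V (j0,b) (j0,b')) * Tp b' l0).
  apply: eq_bigr => b _; apply: eq_bigr => b' _.
  by rewrite -mulr_suml -mulr_sumr.
rewrite /inner mulr_sumr; apply: eq_bigr => b _.
rewrite mulrCA -Tp1 mulr_sumr; apply: eq_bigr => b' _.
by rewrite /Tp; ring.
Qed.

Lemma Tp2s i k j l : \sum_b' V (i,k) (j,b') * Tp b' l = (i == j)%:R * Tp k l.
Proof.
have := congr1 (fun v => v (i,k)) (Tp2 j l).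
rewrite /opapp /vtens /delt sum_pair => h.
transitivity ((i == j)%:R * Tp k l); last by [].
rewrite -h; symmetry.
transitivity (\sum_a (a == j)%:R * \sum_b V (i,k) (a,b) * Tp b l); last by rewrite sum_dl.
by apply: eq_bigr => a _; rewrite mulr_sumr; apply: eq_bigr => b _; ring.
Qed.

Lemma trTp : \sum_k Tp k k = n.
Proof.
rewrite /Tp exchange_big /=.
transitivity (\sum_i Tm i i); first by [].
under eq_bigr do rewrite T3 -mulrA.
rewrite -mulr_sumr -[RHS]mulr1 -he1 /inner; congr (_ * _).
by apply: eq_bigr => i _; rewrite mulrC.
Qed.

Definition Lm (W : op C I) : op C I := fun k l => \sum_i \sum_j W i j * V (i,k) (j,l).

Definition PLW (W1 W2 : op C I) : op C I := fun b b' =>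
  \sum_a \sum_i \sum_j \sum_i' \sum_j' W1 i j * W2 i' j' * (V (a,b) (i,i'))^* * V (a,b') (j,j').

Lemma PL (W1 W2 : op C I) : opmul (Lm W1) (Lm W2) = Lm (PLW W1 W2).
Proof.
apply: functional_extensionality => k; apply: functional_extensionality => l.
rewrite /opmul /Lm /PLW.
transitivity (\sum_i \sum_j \sum_i' \sum_j' W1 i j * W2 i' j' *
              \sum_m V (i,k) (j,m) * V (i',m) (j',l)).
  under eq_bigr do rewrite mulr_suml.
  rewrite sum_in1; apply: eq_bigr => i _.
  under eq_bigr do rewrite mulr_suml.
  rewrite sum_in1; apply: eq_bigr => j _.
  under eq_bigr do rewrite mulr_sumr.
  rewrite sum_in1; apply: eq_bigr => i' _.
  under eq_bigr do rewrite mulr_sumr.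
  rewrite sum_in1; apply: eq_bigr => j' _.
  by rewrite mulr_sumr; apply: eq_bigr => m _; ring.
under eq_bigr do under eq_bigr do under eq_bigr do under eq_bigr do rewrite P3s //.
transitivity (\sum_i \sum_j \sum_i' \sum_j' \sum_a \sum_b' \sum_b
   W1 i j * W2 i' j' * (V (a,b) (i,i'))^* * V (a,b') (j,j') * V (b,k) (b',l)).
  apply: eq_bigr => i _; apply: eq_bigr => j _; apply: eq_bigr => i' _; apply: eq_bigr => j' _.
  rewrite mulr_sumr; apply: eq_bigr => a _.
  rewrite mulr_sumr; apply: eq_bigr => b' _.
  rewrite mulr_suml mulr_sumr; apply: eq_bigr => b _; ring.
rewrite sum_in4x3.
transitivity (\sum_b' \sum_b \sum_a \sum_i \sum_j \sum_i' \sum_j'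
   W1 i j * W2 i' j' * (V (a,b) (i,i'))^* * V (a,b') (j,j') * V (b,k) (b',l)).
  exact: sum_in2.
rewrite exchange_big; apply: eq_bigr => b _; apply: eq_bigr => b' _.
rewrite mulr_suml; apply: eq_bigr => a _.
rewrite mulr_suml; apply: eq_bigr => i _.
rewrite mulr_suml; apply: eq_bigr => j _.
rewrite mulr_suml; apply: eq_bigr => i' _.
by rewrite mulr_suml; apply: eq_bigr => j' _.
Qed.

Lemma Lm_e (W : op C I) : inner e (opapp (Lm W) e) = \sum_i \sum_j W i j * (e i * (e j)^*).
Proof.
rewrite /inner /opapp /Lm.
transitivity (\sum_i \sum_j W i j * R0m i j); last first.
  by apply: eq_bigr => i _; apply: eq_bigr => j _; rewrite R0E.
rewrite /R0m.
transitivity (\sum_k \sum_l \sum_i \sum_j W i j * ((e k)^* * V (i,k) (j,l) * e l)).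
  apply: eq_bigr => k _; rewrite mulr_sumr; apply: eq_bigr => l _.
  rewrite mulr_suml mulr_sumr; apply: eq_bigr => i _.
  rewrite mulr_suml mulr_sumr; apply: eq_bigr => j _; ring.
under eq_bigr do rewrite sum_in2.
rewrite sum_in2; apply: eq_bigr => i _; apply: eq_bigr => j _.
rewrite mulr_sumr; apply: eq_bigr => k _.
by rewrite mulr_sumr.
Qed.

Lemma Lm_tr (W : op C I) : tr (Lm W) = n * inner e (opapp (Lm W) e).
Proof.
rewrite Lm_e /tr /Lm.
rewrite sum_in2 mulr_sumr; apply: eq_bigr => i _.
rewrite mulr_sumr; apply: eq_bigr => j _.
transitivity (W i j * Tm i j); first by rewrite /Tm mulr_sumr.
by rewrite T3; ring.
Qed.

Definition Eij (i j : I) : op C I := fun a b => (a == i)%:R * (b == j)%:R.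

Lemma lin_sum (w : op C I -> C) (T : finType) (F : T -> op C I) :
  lin_functional w -> w (fun a b => \sum_x F x a b) = \sum_x w (F x).
Proof.
move=> [hadd hsc].
have h0 : w (fun _ _ => 0) = 0.
  have -> : (fun _ _ => 0) = opscale 0 (fun _ _ : I => (0 : C)).
    by apply: functional_extensionality => a; apply: functional_extensionality => b;
       rewrite /opscale mul0r.
  by rewrite hsc mul0r.
elim: (index_enum T) => [|x r IH].
  rewrite big_nil -h0; congr w.
  by apply: functional_extensionality => a; apply: functional_extensionality => b; rewrite big_nil.
rewrite big_cons -IH -hadd; congr w.
by apply: functional_extensionality => a; apply: functional_extensionality => b; rewrite big_cons.
Qed.

Lemma lin_coef (w : op C I -> C) (M : op C I) :
  lin_functional w -> w M = \sum_i \sum_j w (Eij i j) * M i j.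
Proof.
move=> hw.
have hM : M = fun a b => \sum_i \sum_j opscale (M i j) (Eij i j) a b.
  apply: functional_extensionality => a; apply: functional_extensionality => b.
  rewrite /opscale /Eij.
  transitivity (\sum_i (i == a)%:R * \sum_j (j == b)%:R * M i j); last first.
    apply: eq_bigr => i _; rewrite mulr_sumr; apply: eq_bigr => j _.
    by rewrite (eq_sym a) (eq_sym b); ring.
  rewrite sum_dl; symmetry.
  by under eq_bigr do rewrite mulrC; rewrite sum_dr.
rewrite {1}hM (lin_sum (fun i => fun a b => \sum_j opscale (M i j) (Eij i j) a b)) //.
apply: eq_bigr => i _.
rewrite (lin_sum (fun j => opscale (M i j) (Eij i j))) //.
by apply: eq_bigr => j _; rewrite hw.2 mulrC.
Qed.

Lemma Lsl_Lm (w : op C I -> C) : lin_functional w -> Lsl V w = Lm (fun i j => w (Eij i j)).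
Proof.
move=> hw; apply: functional_extensionality => k; apply: functional_extensionality => l.
by rewrite /Lsl (lin_coef _ hw).
Qed.

Lemma Lsl_omega (x y : vec C I) : Lsl V (omega x y) = Lm (fun i j => (x i)^* * y j).
Proof.
apply: functional_extensionality => k; apply: functional_extensionality => l.
rewrite /Lsl /omega /inner /opapp /Lm; apply: eq_bigr => i _.
by rewrite mulr_sumr; apply: eq_bigr => j _; ring.
Qed.

Lemma rhoE (x y : vec C I) i j :
  rho V (omega x y) i j = \sum_k \sum_l (x k)^* * V (i,k) (j,l) * y l.
Proof.
rewrite /rho /omega /inner /opapp; apply: eq_bigr => k _.
by rewrite mulr_sumr; apply: eq_bigr => l _; ring.
Qed.

Lemma rho_quad (a b x y : vec C I) :
  inner x (opapp (rho V (omega a b)) y) = inner (vtens x a) (opapp V (vtens y b)).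
Proof.
transitivity (\sum_i \sum_k \sum_j \sum_l (x i)^* * (a k)^* * V (i,k) (j,l) * y j * b l).
  rewrite /inner /opapp; apply: eq_bigr => i _.
  transitivity (\sum_j \sum_k \sum_l (x i)^* * (a k)^* * V (i,k) (j,l) * y j * b l);
    last exact: exchange_big.
  rewrite mulr_sumr; apply: eq_bigr => j _; rewrite rhoE.
  rewrite mulr_suml mulr_sumr; apply: eq_bigr => k _.
  rewrite mulr_suml mulr_sumr; apply: eq_bigr => l _; ring.
rewrite /inner /opapp /vtens sum_pair; apply: eq_bigr => i _; apply: eq_bigr => k _.
rewrite mulr_sumr sum_pair; apply: eq_bigr => j _.
by apply: eq_bigr => l _; rewrite rmorphM /=; ring.
Qed.

Lemma Lm_quad (a b x y : vec C I) :
  inner x (opapp (Lm (fun i j => (a i)^* * b j)) y) = inner (vtens a x) (opapp V (vtens b y)).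
Proof.
transitivity (\sum_k \sum_i \sum_l \sum_j (x k)^* * (a i)^* * V (i,k) (j,l) * y l * b j).
  rewrite /inner /opapp; apply: eq_bigr => k _.
  transitivity (\sum_l \sum_i \sum_j (x k)^* * (a i)^* * V (i,k) (j,l) * y l * b j);
    last exact: exchange_big.
  rewrite mulr_sumr; apply: eq_bigr => l _; rewrite /Lm.
  rewrite mulr_suml mulr_sumr; apply: eq_bigr => i _.
  rewrite mulr_suml mulr_sumr; apply: eq_bigr => j _; ring.
rewrite exchange_big /inner /opapp /vtens sum_pair; apply: eq_bigr => i _; apply: eq_bigr => k _.
rewrite mulr_sumr sum_pair /= exchange_big; apply: eq_bigr => l _.
by apply: eq_bigr => j _; rewrite rmorphM /=; ring.
Qed.

Lemma n_neq0 : n != 0.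
Proof.
rewrite /n pnatr_eq0 -lt0n; apply/card_gt0P.
case: (pickP (fun _ : I => true)) => [i _|h]; first by exists i.
exfalso.
have h0 : inner e e = 0 by rewrite /inner big1 // => i _; have := h i.
by move: he1; rewrite h0 => /eqP; rewrite eq_sym oner_eq0.
Qed.

Lemma pl_inner l l' :
  \sum_k \sum_k' Tm k k' * (\sum_i \sum_j (V (i,k) (j,l))^* * V (i,k') (j,l')) = (l == l')%:R * n.
Proof.
transitivity (\sum_k \sum_k' \sum_m \sum_i \sum_j
   (V (i,k) (j,l))^* * V (k,m) (k',m) * V (i,k') (j,l')).
  apply: eq_bigr => k _; apply: eq_bigr => k' _; rewrite /Tm mulr_suml.
  apply: eq_bigr => m _; rewrite mulr_sumr; apply: eq_bigr => i _.
  rewrite mulr_sumr; apply: eq_bigr => j _; ring.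
under eq_bigr do rewrite sum_in3.
rewrite sum_in4.
transitivity (\sum_m \sum_j \sum_i \sum_k' \sum_k
   (V (i,k) (j,l))^* * V (k,m) (k',m) * V (i,k') (j,l')).
  by apply: eq_bigr => m _; rewrite exchange_big.
transitivity (\sum_m \sum_j \sum_m' V (j,m) (j,m') * V (l,m') (l',m)).
  apply: eq_bigr => m _; apply: eq_bigr => j _; rewrite P3s //.
  apply: eq_bigr => i _; apply: eq_bigr => k' _.
  by rewrite mulr_suml.
transitivity (\sum_m' \sum_m V (l,m') (l',m) * Tp m m').
  under eq_bigr do rewrite exchange_big.
  rewrite exchange_big; apply: eq_bigr => m' _; apply: eq_bigr => m _.
  by rewrite /Tp mulr_sumr; apply: eq_bigr => j _; rewrite mulrC.
under eq_bigr do rewrite Tp2s.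
by rewrite -mulr_sumr trTp.
Qed.

Lemma planch (g : vec C I) :
  \sum_i \sum_j (rho V (omega e g) i j)^* * rho V (omega e g) i j = inner g g.
Proof.
apply: (mulfI n_neq0).
transitivity (n * \sum_i \sum_j \sum_k \sum_l \sum_k' \sum_l'
    (g l)^* * g l' * ((e k * (e k')^*) * ((V (i,k) (j,l))^* * V (i,k') (j,l')))).
  congr (_ * _); apply: eq_bigr => i _; apply: eq_bigr => j _.
  rewrite !rhoE rmorph_sum mulr_suml; apply: eq_bigr => k _.
  rewrite rmorph_sum mulr_suml; apply: eq_bigr => l _.
  rewrite mulr_sumr; apply: eq_bigr => k' _.
  rewrite mulr_sumr; apply: eq_bigr => l' _.
  by rewrite !rmorphM /= conjCK; ring.
rewrite sum6_perm.
transitivity (\sum_l \sum_l' (g l)^* * g l' * ((l == l')%:R * n)).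
  rewrite mulr_sumr; apply: eq_bigr => l _.
  rewrite mulr_sumr; apply: eq_bigr => l' _.
  rewrite -pl_inner [LHS]mulr_sumr [RHS]mulr_sumr; apply: eq_bigr => k _.
  rewrite [LHS]mulr_sumr [RHS]mulr_sumr; apply: eq_bigr => k' _.
  rewrite T3 !mulr_sumr; apply: eq_bigr => i _.
  rewrite !mulr_sumr; apply: eq_bigr => j _; ring.
rewrite /inner mulr_sumr; apply: eq_bigr => l _.
transitivity (\sum_l' (l' == l)%:R * ((g l)^* * g l' * n)).
  by apply: eq_bigr => l' _; rewrite eq_sym; ring.
by rewrite sum_dl; ring.
Qed.

Lemma sum4_split (A B : I -> I -> C) :
  \sum_k \sum_l \sum_k' \sum_l' A k k' * B l l' = (\sum_k \sum_k' A k k') * (\sum_l \sum_l' B l l').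
Proof.
under eq_bigr do rewrite exchange_big.
rewrite mulr_suml; apply: eq_bigr => k _.
rewrite mulr_suml; apply: eq_bigr => k' _.
rewrite mulr_sumr; apply: eq_bigr => l _.
by rewrite mulr_sumr.
Qed.

Lemma ee_contr b c : \sum_k \sum_k' (e k)^* * (e k')^* * V (k,k') (b,c) = (e b)^* * (e c)^*.
Proof.
rewrite exchange_big /=.
transitivity (\sum_k' (e k')^* * \sum_k (e k)^* * V (k,k') (b,c)).
  by apply: eq_bigr => k' _; rewrite mulr_sumr; apply: eq_bigr => k _; ring.
under eq_bigr do rewrite Fs'c.
transitivity (\sum_k' (k' == c)%:R * ((e k')^* * (e b)^*)).
  by apply: eq_bigr => k' _; rewrite eq_sym; ring.
by rewrite sum_dl mulrC.
Qed.

Definition hvec (g1 g2 : vec C I) : vec C I :=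
  fun b' => \sum_c (e c)^* * opapp (opadj V) (vtens g1 g2) (b',c).

Lemma rho_hom (g1 g2 : vec C I) :
  opmul (rho V (omega e g1)) (rho V (omega e g2)) = rho V (omega e (hvec g1 g2)).
Proof.
apply: functional_extensionality => i; apply: functional_extensionality => j.
rewrite /opmul rhoE.
transitivity (\sum_k \sum_l \sum_k' \sum_l' \sum_b' \sum_c \sum_b
  ((e k)^* * (e k')^* * V (k,k') (b,c)) * ((V (l,l') (b',c))^* * g1 l * g2 l') * V (i,b) (j,b')).
  transitivity (\sum_k \sum_l \sum_k' \sum_l' (e k)^* * (e k')^* * g1 l * g2 l' *
                 \sum_m V (i,k) (m,l) * V (m,k') (j,l')).
    transitivity (\sum_m \sum_k \sum_l \sum_k' \sum_l'
       (e k)^* * (e k')^* * g1 l * g2 l' * (V (i,k) (m,l) * V (m,k') (j,l'))).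
      apply: eq_bigr => m _; rewrite !rhoE mulr_suml; apply: eq_bigr => k _.
      rewrite mulr_suml; apply: eq_bigr => l _.
      rewrite mulr_sumr; apply: eq_bigr => k' _.
      rewrite mulr_sumr; apply: eq_bigr => l' _; ring.
    rewrite sum_in4; apply: eq_bigr => k _; apply: eq_bigr => l _.
    apply: eq_bigr => k' _; apply: eq_bigr => l' _.
    by rewrite mulr_sumr.
  apply: eq_bigr => k _; apply: eq_bigr => l _; apply: eq_bigr => k' _; apply: eq_bigr => l' _.
  rewrite P2s // mulr_sumr; apply: eq_bigr => b' _.
  rewrite mulr_sumr; apply: eq_bigr => c _.
  rewrite mulr_suml mulr_sumr; apply: eq_bigr => b _; ring.
rewrite sum_in4x3.
transitivity (\sum_b' \sum_c \sum_b (e b)^* * (e c)^* * opapp (opadj V) (vtens g1 g2) (b',c) * V (i,b) (j,b')).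
  apply: eq_bigr => b' _; apply: eq_bigr => c _; apply: eq_bigr => b _.
  rewrite -ee_contr.
  transitivity ((\sum_k \sum_l \sum_k' \sum_l'
     ((e k)^* * (e k')^* * V (k,k') (b,c)) * ((V (l,l') (b',c))^* * g1 l * g2 l')) * V (i,b) (j,b')).
    rewrite mulr_suml; apply: eq_bigr => k _; rewrite mulr_suml; apply: eq_bigr => l _.
    by rewrite mulr_suml; apply: eq_bigr => k' _; rewrite mulr_suml.
  rewrite (sum4_split (fun k k' => (e k)^* * (e k')^* * V (k,k') (b,c))
                      (fun l l' => (V (l,l') (b',c))^* * g1 l * g2 l')).
  congr (_ * _ * _); rewrite /opapp /opadj /vtens sum_pair; apply: eq_bigr => l _.
  by apply: eq_bigr => l' _; ring.
rewrite /hvec -sum_in2; apply: eq_bigr => b _; apply: eq_bigr => b' _.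
rewrite mulr_sumr; apply: eq_bigr => c _; ring.
Qed.

Lemma phiLm (W : op C I) : n * inner e (opapp (Lm W) e) = tr (Lm W).
Proof. by rewrite Lm_tr. Qed.

Lemma phi_cancel (W1 W2 : op C I) :
  tr (Lm W1) = tr (Lm W2) -> inner e (opapp (Lm W1) e) = inner e (opapp (Lm W2) e).
Proof. by move=> h; apply: (mulfI n_neq0); rewrite !phiLm. Qed.

Section Cyc.
Variable W : op C I.
Hypothesis hp : orth_proj (Lm W).
Let p := Lm W.
Let psi := opapp p e.

Lemma cyc1 (Y : op C I) :
  inner e (opapp (Lm Y) psi) = inner psi (opapp (Lm Y) psi).
Proof.
rewrite /psi -opapp_mul inner_adj' hp.1 -!opapp_mul.
rewrite /p !PL; apply: phi_cancel.
by rewrite -!PL [RHS]tr_comm -opmulA hp.2.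
Qed.

Lemma cyc2 (Y : op C I) :
  inner psi (opapp (Lm Y) e) = inner e (opapp (Lm Y) psi).
Proof.
rewrite /psi inner_adj' hp.1 -!opapp_mul.
rewrite /p !PL; apply: phi_cancel.
by rewrite -!PL tr_comm.
Qed.

Lemma rho_slice (a b : vec C I) i j :
  rho V (omega a b) i j = inner a (opapp (Lm (Eij i j)) b).
Proof.
rewrite rhoE /inner /opapp /Lm; apply: eq_bigr => k _.
rewrite mulr_sumr; apply: eq_bigr => l _.
have -> : \sum_i0 \sum_j0 Eij i j i0 j0 * V (i0,k) (j0,l) = V (i,k) (j,l).
  rewrite /Eij.
  transitivity (\sum_i0 (i0 == i)%:R * \sum_j0 (j0 == j)%:R * V (i0,k) (j0,l)).
    by apply: eq_bigr => i0 _; rewrite mulr_sumr; apply: eq_bigr => j0 _; ring.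
  rewrite sum_dl; exact: sum_dl.
ring.
Qed.

Lemma rho_cyc_pp : rho V (omega e psi) = rho V (omega psi psi).
Proof.
apply: functional_extensionality => i; apply: functional_extensionality => j.
by rewrite !rho_slice cyc1.
Qed.

Lemma rho_cyc_pe : rho V (omega psi e) = rho V (omega e psi).
Proof.
apply: functional_extensionality => i; apply: functional_extensionality => j.
by rewrite !rho_slice cyc2.
Qed.

End Cyc.

Lemma Tp_Lm : (fun k l => Tp k l) = Lm op1.
Proof.
apply: functional_extensionality => k; apply: functional_extensionality => l.
rewrite /Tp /Lm /op1; apply: eq_bigr => i _.
by rewrite (eq_bigr (fun j => (j == i)%:R * V (i,k) (j,l))) ?sum_dl // => j _; rewrite eq_sym.
Qed.

Lemma pTp (W : op C I) :
  opmul (Lm W) (fun k l => Tp k l) = opscale (\sum_i W i i) (fun k l => Tp k l).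
Proof.
apply: functional_extensionality => k; apply: functional_extensionality => l.
rewrite /opmul /opscale /Lm.
transitivity (\sum_i \sum_j W i j * \sum_m V (i,k) (j,m) * Tp m l).
  under eq_bigr do rewrite mulr_suml.
  rewrite sum_in1; apply: eq_bigr => i _.
  under eq_bigr do rewrite mulr_suml.
  rewrite sum_in1; apply: eq_bigr => j _.
  by rewrite mulr_sumr; apply: eq_bigr => m _; ring.
under eq_bigr do under eq_bigr do rewrite Tp2s.
rewrite mulr_suml; apply: eq_bigr => i _.
transitivity (\sum_j (j == i)%:R * (W i j * Tp k l)); last by rewrite sum_dl.
by apply: eq_bigr => j _; rewrite (eq_sym j); ring.
Qed.

Lemma Vtens_entry (x y : vec C I) a b :
  opapp V (vtens x y) (a,b) = \sum_i \sum_i' V (a,b) (i,i') * (x i * y i').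
Proof. by rewrite /opapp /vtens sum_pair. Qed.

Lemma Vadj_tens_entry (x y : vec C I) a b :
  opapp (opadj V) (vtens x y) (a,b) = \sum_i \sum_i' (V (i,i') (a,b))^* * (x i * y i').
Proof. by rewrite /opapp /vtens /opadj sum_pair. Qed.

Lemma lin_l (a x : vec C I) (u : vec C (I * I)%type) :
  \sum_i (a i)^* * inner (vtens (delt C i) x) u = inner (vtens a x) u.
Proof.
rewrite /inner /vtens [RHS]sum_pair.
transitivity (\sum_i \sum_k \sum_l (a i)^* * ((delt C i k)^* * (x l)^* * u (k,l))).
  apply: eq_bigr => i _; rewrite sum_pair mulr_sumr; apply: eq_bigr => k _.
  by rewrite mulr_sumr; apply: eq_bigr => l _; rewrite rmorphM /=; ring.
rewrite exchange_big; apply: eq_bigr => k _.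
transitivity (\sum_i (i == k)%:R * \sum_l (a i)^* * (x l)^* * u (k,l)).
  apply: eq_bigr => i _; rewrite mulr_sumr; apply: eq_bigr => l _.
  by rewrite /delt eq_sym rmorph_nat; ring.
rewrite sum_dl; apply: eq_bigr => l _; rewrite rmorphM; ring.
Qed.

Lemma lin_r (b y : vec C I) (u : vec C (I * I)%type) :
  \sum_j b j * inner u (vtens (delt C j) y) = inner u (vtens b y).
Proof.
rewrite -[RHS]conjCK -inner_conj -lin_l rmorph_sum; apply: eq_bigr => j _.
by rewrite rmorphM /= conjCK -inner_conj.
Qed.

Lemma linV_r (b y : vec C I) (u : vec C (I * I)%type) :
  \sum_j b j * inner u (opapp V (vtens (delt C j) y)) = inner u (opapp V (vtens b y)).
Proof. by rewrite inner_adj -lin_r; apply: eq_bigr => j _; rewrite inner_adj. Qed.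

Definition Gq (x : vec C I) i m := inner (vtens (delt C i) x) (opapp V (vtens (delt C m) x)).

Lemma Gsum (a b x : vec C I) :
  \sum_i \sum_m (a i)^* * b m * Gq x i m = inner (vtens a x) (opapp V (vtens b x)).
Proof.
rewrite -lin_l; apply: eq_bigr => i _.
rewrite -linV_r mulr_sumr; apply: eq_bigr => m _; rewrite /Gq; ring.
Qed.

Definition Wf (f : vec C I) : op C I := fun i j => (f i)^* * f j.

Lemma delta_entry (W : op C I) a b a' b' :
  delta V (Lm W) (a,b) (a',b') = \sum_i \sum_j W i j * \sum_m V (i,a) (m,a') * V (m,b) (j,b').
Proof.
rewrite /delta /opmul /optens /opadj sum_pair.
transitivity (\sum_c' \sum_d \sum_c V (a,b) (c,d) * Lm W c c' * (V (a',b') (c',d))^*).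
  apply: eq_bigr => c' _; apply: eq_bigr => d _.
  rewrite sum_pair mulr_suml.
  transitivity (\sum_c \sum_d0 (d0 == d)%:R * (V (a,b) (c,d0) * Lm W c c' * (V (a',b') (c',d))^*)).
    apply: eq_bigr => c _; rewrite mulr_suml; apply: eq_bigr => d0 _.
    by rewrite /op1 /=; ring.
  by apply: eq_bigr => c _; rewrite sum_dl.
transitivity (\sum_c' \sum_d \sum_c \sum_i \sum_j
   W i j * (V (a,b) (c,d) * V (i,c) (j,c') * (V (a',b') (c',d))^*)).
  apply: eq_bigr => c' _; apply: eq_bigr => d _; apply: eq_bigr => c _.
  rewrite /Lm mulr_sumr mulr_suml; apply: eq_bigr => i _.
  rewrite mulr_sumr mulr_suml; apply: eq_bigr => j _; ring.
rewrite sum3x2; apply: eq_bigr => i _; apply: eq_bigr => j _.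
rewrite P2s // mulr_sumr; apply: eq_bigr => c' _.
rewrite mulr_sumr; apply: eq_bigr => d _.
rewrite mulr_suml mulr_sumr; apply: eq_bigr => c _; ring.
Qed.

Lemma delta_quad (W : op C I) (xi zeta : vec C I) :
  inner (vtens xi zeta) (opapp (delta V (Lm W)) (vtens xi zeta)) =
  \sum_i \sum_j W i j * \sum_m Gq xi i m * Gq zeta m j.
Proof.
transitivity (\sum_a \sum_b \sum_a' \sum_b' \sum_i \sum_j \sum_m
   ((xi a)^* * V (i,a) (m,a') * xi a') * (W i j * ((zeta b)^* * V (m,b) (j,b') * zeta b'))).
  rewrite /inner /opapp /vtens sum_pair; apply: eq_bigr => a _.
  apply: eq_bigr => b _; rewrite sum_pair mulr_sumr; apply: eq_bigr => a' _.
  rewrite mulr_sumr; apply: eq_bigr => b' _.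
  rewrite delta_entry mulr_suml mulr_sumr; apply: eq_bigr => i _.
  rewrite mulr_suml mulr_sumr; apply: eq_bigr => j _.
  rewrite mulr_sumr mulr_suml mulr_sumr; apply: eq_bigr => m _.
  by rewrite rmorphM /=; ring.
rewrite sum_in4x3; apply: eq_bigr => i _; apply: eq_bigr => j _.
rewrite mulr_sumr; apply: eq_bigr => m _.
transitivity (W i j * \sum_a \sum_b \sum_a' \sum_b'
   ((xi a)^* * V (i,a) (m,a') * xi a') * ((zeta b)^* * V (m,b) (j,b') * zeta b')).
  rewrite mulr_sumr; apply: eq_bigr => a _; rewrite mulr_sumr; apply: eq_bigr => b _.
  rewrite mulr_sumr; apply: eq_bigr => a' _; rewrite mulr_sumr; apply: eq_bigr => b' _; ring.
congr (_ * _).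
rewrite (sum4_split (fun a a' => (xi a)^* * V (i,a) (m,a') * xi a')
                    (fun b b' => (zeta b)^* * V (m,b) (j,b') * zeta b')).
by rewrite /Gq !quadV_l.
Qed.

Section QLem.
Variable f : vec C I.
Hypothesis hff : inner f f = 1.
Hypothesis hVf : opapp V (vtens f f) = vtens f f.
Let q := Lm (Wf f).

Lemma PLW_f : PLW (Wf f) (Wf f) = Wf f.
Proof.
apply: functional_extensionality => b; apply: functional_extensionality => b'.
rewrite /PLW /Wf.
transitivity (\sum_a (\sum_i \sum_i' (f i)^* * (f i')^* * (V (a,b) (i,i'))^*) *
                      (\sum_j \sum_j' f j * f j' * V (a,b') (j,j'))).
  apply: eq_bigr => a _.
  rewrite -(sum4_split (fun i i' => (f i)^* * (f i')^* * (V (a,b) (i,i'))^*)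
                       (fun j j' => f j * f j' * V (a,b') (j,j'))).
  apply: eq_bigr => i _; apply: eq_bigr => j _; apply: eq_bigr => i' _; apply: eq_bigr => j' _; ring.
have h1 : forall a b0, \sum_j \sum_j' f j * f j' * V (a,b0) (j,j') = f a * f b0.
  move=> a b0; have := congr1 (fun v => v (a,b0)) hVf.
  rewrite Vtens_entry /vtens => <-.
  by apply: eq_bigr => j _; apply: eq_bigr => j' _; ring.
have h2 : forall a b0, \sum_i \sum_i' (f i)^* * (f i')^* * (V (a,b0) (i,i'))^* = (f a)^* * (f b0)^*.
  move=> a b0; rewrite -rmorphM -h1 rmorph_sum; apply: eq_bigr => i _.
  by rewrite rmorph_sum; apply: eq_bigr => i' _; rewrite !rmorphM.
under eq_bigr do rewrite h1 h2.
transitivity ((\sum_a (f a)^* * f a) * ((f b)^* * f b')).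
  by rewrite mulr_suml; apply: eq_bigr => a _; ring.
have -> : \sum_a (f a)^* * f a = 1 by exact: hff.
by rewrite mul1r.
Qed.

Lemma q_idem : opmul q q = q.
Proof. by rewrite /q PL PLW_f. Qed.

Lemma q_range x : opapp V (vtens f (opapp q x)) = vtens f (opapp q x).
Proof.
apply: unit_fix => //.
by rewrite -Lm_quad -/q -opapp_mul q_idem inner_vtens hff mul1r.
Qed.

Lemma q_proj : orth_proj q.
Proof.
apply: idem_adj; first exact: q_idem.
move=> x; apply: vec_ext => y.
rewrite inner_adj opadjK (inner_conj (opapp q x)) /q Lm_quad inner_adj.
rewrite unit_fix_adj // ?q_range // inner_conj inner_vtens hff mul1r.
by rewrite conjCK.
Qed.

End QLem.

Lemma opscale_mul (a b : C) (X Y : op C I) :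
  opmul (opscale a X) (opscale b Y) = opscale (a * b) (opmul X Y).
Proof.
apply: functional_extensionality => i; apply: functional_extensionality => k.
rewrite /opmul /opscale mulr_sumr; apply: eq_bigr => j _; ring.
Qed.
Lemma opscale_adj (a : C) (X : op C I) : opadj (opscale a X) = opscale a^* (opadj X).
Proof.
by apply: functional_extensionality => i; apply: functional_extensionality => k;
   rewrite /opadj /opscale rmorphM.
Qed.
Lemma opscaleA (a b : C) (X : op C I) : opscale a (opscale b X) = opscale (a * b) X.
Proof.
by apply: functional_extensionality => i; apply: functional_extensionality => k;
   rewrite /opscale mulrA.
Qed.
Lemma opscale1 (X : op C I) : opscale 1 X = X.
Proof.
by apply: functional_extensionality => i; apply: functional_extensionality => k;
   rewrite /opscale mul1r.
Qed.
Lemma tr_scale (a : C) (X : op C I) : tr (opscale a X) = a * tr X.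
Proof. by rewrite /tr /opscale mulr_sumr. Qed.

Lemma rho_scale (a : C) (x : vec C I) :
  rho V (omega e (vscale a x)) = opscale a (rho V (omega e x)).
Proof.
apply: functional_extensionality => i; apply: functional_extensionality => k.
rewrite /opscale !rhoE mulr_sumr; apply: eq_bigr => k0 _.
rewrite mulr_sumr; apply: eq_bigr => l _; rewrite /vscale; ring.
Qed.
Lemma rho_sub (x y : vec C I) :
  rho V (omega e (vsub x y)) = opsub (rho V (omega e x)) (rho V (omega e y)).
Proof.
apply: functional_extensionality => i; apply: functional_extensionality => k.
rewrite /opsub !rhoE -sumrB; apply: eq_bigr => k0 _.
rewrite -sumrB; apply: eq_bigr => l _; rewrite /vsub; ring.
Qed.

Section QLem2.
Variable f : vec C I.
Hypothesis hff : inner f f = 1.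
Hypothesis hVf : opapp V (vtens f f) = vtens f f.
Let q := Lm (Wf f).
Let D := delta V q.

Lemma D_proj : orth_proj D.
Proof. exact: conj_proj hU (proj_tens (q_proj hff hVf) (proj1 C I)). Qed.

Lemma quadKA (xi zeta : vec C I) : opapp V (vtens f zeta) = vtens f zeta ->
  inner (vtens xi zeta) (opapp D (vtens xi zeta)) = inner zeta zeta * inner xi (opapp q xi).
Proof.
move=> hz; rewrite /D /q delta_quad.
have hG : forall m, \sum_j f j * Gq zeta m j = f m * inner zeta zeta.
  move=> m; rewrite /Gq linV_r hz inner_vtens inner_delt_l //.
transitivity (\sum_i \sum_m (f i)^* * Gq xi i m * \sum_j f j * Gq zeta m j).
  apply: eq_bigr => i _.
  transitivity (\sum_j \sum_m (f i)^* * f j * (Gq xi i m * Gq zeta m j)).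
    by apply: eq_bigr => j _; rewrite /Wf mulr_sumr.
  rewrite exchange_big; apply: eq_bigr => m _.
  by rewrite mulr_sumr; apply: eq_bigr => j _; ring.
under eq_bigr do under eq_bigr do rewrite hG.
rewrite /Wf Lm_quad -Gsum mulr_sumr; apply: eq_bigr => i _.
by rewrite mulr_sumr; apply: eq_bigr => m _; ring.
Qed.

Lemma quadKB (xi zeta : vec C I) : opapp V (vtens f xi) = vtens f xi ->
  inner (vtens xi zeta) (opapp D (vtens xi zeta)) = inner xi xi * inner zeta (opapp q zeta).
Proof.
move=> hx; rewrite /D /q delta_quad.
have hG : forall m, \sum_i (f i)^* * Gq xi i m = (f m)^* * inner xi xi.
  move=> m; rewrite /Gq lin_l inner_adj (unit_fix_adj hU hx) inner_vtens inner_delt_r //.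
transitivity (\sum_m \sum_j (\sum_i (f i)^* * Gq xi i m) * f j * Gq zeta m j).
  transitivity (\sum_i \sum_j \sum_m (f i)^* * f j * (Gq xi i m * Gq zeta m j)).
    by apply: eq_bigr => i _; apply: eq_bigr => j _; rewrite /Wf mulr_sumr.
  rewrite sum_in2 exchange_big; apply: eq_bigr => m _; apply: eq_bigr => j _.
  by rewrite !mulr_suml; apply: eq_bigr => i _; ring.
under eq_bigr do under eq_bigr do rewrite hG.
rewrite /Wf Lm_quad -Gsum mulr_sumr; apply: eq_bigr => m _.
by rewrite mulr_sumr; apply: eq_bigr => j _; ring.
Qed.

Lemma vdecomp (x : vec C I) : x = vadd (opapp q x) (vsub x (opapp q x)).
Proof. by apply: functional_extensionality => i; rewrite /vadd /vsub addrC subrK. Qed.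

Lemma q_kill (x : vec C I) : opapp q (vsub x (opapp q x)) = @vzero C I.
Proof.
rewrite opapp_sub -opapp_mul q_idem //.
by apply: functional_extensionality => i; rewrite /vsub /vzero subrr.
Qed.

Lemma KA (xi zeta : vec C I) : opapp V (vtens f zeta) = vtens f zeta ->
  opapp D (vtens xi zeta) = vtens (opapp q xi) zeta.
Proof.
move=> hz.
rewrite {1}(vdecomp xi) vtens_addl opapp_lin.
have h1 : opapp D (vtens (opapp q xi) zeta) = vtens (opapp q xi) zeta.
  apply: proj_fix; first exact: D_proj.
  by rewrite quadKA // -opapp_mul q_idem // inner_vtens mulrC.
have h2 : opapp D (vtens (vsub xi (opapp q xi)) zeta) = @vzero C (I * I)%type.
  apply: proj_kill; first exact: D_proj.
  by rewrite quadKA // q_kill inner0r mulr0.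
rewrite h1 h2; apply: functional_extensionality => i; by rewrite /vadd /vzero addr0.
Qed.

Lemma KB (xi zeta : vec C I) : opapp V (vtens f xi) = vtens f xi ->
  opapp D (vtens xi zeta) = vtens xi (opapp q zeta).
Proof.
move=> hx.
rewrite {1}(vdecomp zeta) vtens_addr opapp_lin.
have h1 : opapp D (vtens xi (opapp q zeta)) = vtens xi (opapp q zeta).
  apply: proj_fix; first exact: D_proj.
  by rewrite quadKB // -opapp_mul q_idem // inner_vtens.
have h2 : opapp D (vtens xi (vsub zeta (opapp q zeta))) = @vzero C (I * I)%type.
  apply: proj_kill; first exact: D_proj.
  by rewrite quadKB // q_kill inner0r mulr0.
rewrite h1 h2; apply: functional_extensionality => i; by rewrite /vadd /vzero addr0.
Qed.

Lemma S2q : opmul D (optens op1 q) = optens q q.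
Proof.
apply: op_ext_tens => xi zeta.
rewrite opapp_mul !opapp_tens opapp1 KA //.
exact: q_range.
Qed.

Lemma S3q : opmul D (optens q op1) = optens q q.
Proof.
apply: op_ext_tens => xi zeta.
rewrite opapp_mul !opapp_tens opapp1 KB //.
exact: q_range.
Qed.

End QLem2.

Lemma opmul_scaler (a : C) (X Y : op C I) : opmul X (opscale a Y) = opscale a (opmul X Y).
Proof.
apply: functional_extensionality => i; apply: functional_extensionality => k.
rewrite /opmul /opscale mulr_sumr; apply: eq_bigr => j _; ring.
Qed.

Section Thm.
Variable W : op C I.
Let p := Lm W.
Hypothesis hp : orth_proj p.
Hypothesis hp0 : p <> op0.
Let psi := opapp p e.
Let c := inner e psi.

Lemma psi_fix : opapp p psi = psi.
Proof. by rewrite /psi -opapp_mul hp.2. Qed.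
Lemma c_eq : c = inner psi psi.
Proof. by rewrite /c /psi proj_quad. Qed.
Lemma c_ge0 : 0 <= c.
Proof. by rewrite c_eq inner_ge0. Qed.
Lemma c_real : c^* = c.
Proof. by rewrite geC0_conj // c_ge0. Qed.
Lemma ce_real : inner psi e = c.
Proof. by rewrite inner_conj -/c c_real. Qed.
Lemma trp : tr p = n * c.
Proof. by rewrite /p -phiLm. Qed.
Lemma c_neq0 : c != 0.
Proof.
apply/negP => /eqP hc; apply: hp0.
have h0 : tr (opmul (opadj p) p) = 0 by rewrite hp.1 hp.2 trp hc mulr0.
apply: functional_extensionality => i; apply: functional_extensionality => j.
exact: tr_adj_eq0 h0 i j.
Qed.
Lemma c_gt0 : 0 < c.
Proof. by rewrite lt_def c_neq0 c_ge0. Qed.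

Let A := delta V p.
Lemma A_proj : orth_proj A.
Proof. exact: conj_proj hU (proj_tens hp (proj1 C I)). Qed.

Lemma A_e (x : vec C I) : opapp A (vtens e x) = opapp V (vtens (opapp p e) x).
Proof.
rewrite /A /delta !opapp_mul unit_fix_adj // ?hfix // opapp_tens opapp1 //.
Qed.

Lemma I1 : op_le (optens p p) (delta V p) -> opapp V (vtens psi psi) = vtens psi psi.
Proof.
move=> h1; set x := vtens psi psi.
have hB : opapp (optens p p) x = x by rewrite /x opapp_tens psi_fix.
have hAx : opapp A x = x.
  apply: proj_fix; first exact: A_proj.
  apply/eqP; rewrite eq_le (proj_le _ A_proj) /=.
  by have := h1 x; rewrite opapp_opsub innerBr hB subr_ge0.
apply: unit_fix => //.
have h2 : inner (opapp V x) x = c * c.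
  rewrite /x -/psi -A_e inner_adj' A_proj.1 hAx inner_vtens -c_eq //.
rewrite inner_conj h2 rmorphM /= c_real /x inner_vtens -c_eq //.
Qed.

Let s := vnorm psi.
Lemma s_eq : s = sqrtC c.
Proof. by rewrite /s /vnorm -c_eq. Qed.
Lemma s_gt0 : 0 < s.
Proof. by rewrite s_eq sqrtC_gt0 c_gt0. Qed.
Lemma s_real : s^* = s.
Proof. by rewrite geC0_conj // ltW // s_gt0. Qed.
Lemma s_sq : s * s = c.
Proof. by rewrite s_eq -expr2 sqrtCK. Qed.
Lemma s_neq0 : s != 0.
Proof. by rewrite gt_eqF // s_gt0. Qed.

Let f := vscale s^-1 psi.
Lemma psi_f : psi = vscale s f.
Proof.
by apply: functional_extensionality => i; rewrite /f /vscale mulrA mulfV ?s_neq0 // mul1r.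
Qed.
Lemma ff1 : inner f f = 1.
Proof.
rewrite /f innerZl innerZr -c_eq -s_sq fmorphV /= s_real.
by rewrite mulrA mulrACA mulVf ?s_neq0 // mul1r.
Qed.
Lemma fe : inner f e = s.
Proof.
rewrite /f innerZl ce_real -s_sq fmorphV /= s_real mulrA mulVf ?s_neq0 //.
by rewrite mul1r.
Qed.

Lemma VPP_f : opapp V (vtens psi psi) = vtens psi psi -> opapp V (vtens f f) = vtens f f.
Proof.
move=> h; rewrite /f vtens_scale opapp_scale h //.
Qed.

Lemma f_psi_fix : opapp V (vtens f f) = vtens f f -> opapp V (vtens f psi) = vtens f psi.
Proof.
move=> h.
have -> : vtens f psi = vscale s (vtens f f).
  by rewrite psi_f; apply: functional_extensionality => -[i k]; rewrite /vtens /vscale; ring.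
by rewrite opapp_scale h.
Qed.

Lemma p_eq_q : opapp V (vtens f f) = vtens f f -> p = Lm (Wf f).
Proof.
move=> hVf.
set q := Lm (Wf f).
have hq := q_proj ff1 hVf.
apply: opsub_eq0; apply: tr_adj_eq0.
rewrite opadj_sub hp.1 hq.1 opmul_subl !opmul_subr hp.2 hq.2 !tr_sub trp.
have htrq : tr q = n * c.
  rewrite /q -phiLm Lm_e.
  transitivity (n * (inner f e * (inner f e)^*)).
    congr (_ * _); rewrite /inner mulr_suml; apply: eq_bigr => i _.
    rewrite rmorph_sum mulr_sumr; apply: eq_bigr => j _.
    by rewrite /Wf rmorphM /= conjCK; ring.
  by rewrite fe s_real s_sq.
have htrpq : tr (opmul p q) = n * c.
  rewrite /q (PL W (Wf f)) -phiLm -PL opapp_mul inner_adj.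
  have hpa : opadj (Lm W) = Lm W := hp.1.
  rewrite hpa /Wf Lm_quad inner_adj (unit_fix_adj hU (f_psi_fix hVf)).
  by rewrite inner_vtens ff1 mul1r ce_real.
rewrite htrq htrpq tr_comm htrpq; ring.
Qed.

Lemma G6 : opapp V (vtens psi psi) = vtens psi psi ->
  pre_subgroup V e f /\ p = Lsl V (omega f f).
Proof.
move=> h.
have hVf := VPP_f h.
split; last by rewrite Lsl_omega p_eq_q.
split; first by rewrite /vnorm ff1 sqrtC1.
by rewrite fe s_gt0.
Qed.

Let R := rho V (omega e psi).

Lemma I62 : pre_subgroup V e f /\ p = Lsl V (omega f f) ->
  opmul (delta V p) (optens op1 p) = optens p p.
Proof.
case=> [[_ [_ hVf]] _].
by rewrite (p_eq_q hVf); apply: S2q; [exact: ff1 | exact: hVf].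
Qed.

Lemma I63 : pre_subgroup V e f /\ p = Lsl V (omega f f) ->
  opmul (delta V p) (optens p op1) = optens p p.
Proof.
case=> [[_ [_ hVf]] _].
by rewrite (p_eq_q hVf); apply: S3q; [exact: ff1 | exact: hVf].
Qed.

Lemma Bp_proj : orth_proj (optens p p).
Proof. exact: proj_tens hp hp. Qed.

Lemma I21 : opmul (delta V p) (optens op1 p) = optens p p -> op_le (optens p p) (delta V p).
Proof.
move=> h; apply: proj_sub; [exact: A_proj | exact: Bp_proj |].
by rewrite -{1}h opmulA A_proj.2 h.
Qed.

Lemma I31 : opmul (delta V p) (optens p op1) = optens p p -> op_le (optens p p) (delta V p).
Proof.
move=> h; apply: proj_sub; [exact: A_proj | exact: Bp_proj |].
by rewrite -{1}h opmulA A_proj.2 h.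
Qed.

Lemma VPP_of_f : opapp V (vtens f f) = vtens f f -> opapp V (vtens psi psi) = vtens psi psi.
Proof.
move=> h; rewrite psi_f vtens_scale opapp_scale h //.
Qed.

Lemma RR_VPP : opapp V (vtens psi psi) = vtens psi psi -> opmul R R = opscale c R.
Proof.
move=> h; rewrite /R rho_hom -rho_scale; congr (rho V (omega e _)).
apply: functional_extensionality => b; rewrite /hvec /vscale (unit_fix_adj hU h) /vtens /c /inner.
by rewrite mulr_suml; apply: eq_bigr => c0 _; ring.
Qed.

Lemma R_pp : R = rho V (omega psi psi).
Proof. exact: rho_cyc_pp. Qed.

Lemma Rquad (x y : vec C I) : inner x (opapp R y) = inner (vtens x psi) (opapp V (vtens y psi)).
Proof. by rewrite R_pp rho_quad. Qed.

Let P := opscale c^-1 R.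

Lemma RP : R = opscale c P.
Proof. by rewrite /P opscaleA mulfV ?c_neq0 // opscale1. Qed.

Lemma I65 : pre_subgroup V e f /\ p = Lsl V (omega f f) ->
  c != 0 /\ orth_proj P.
Proof.
case=> [[_ [_ hVf]] _].
have hV := VPP_of_f hVf.
split; first exact: c_neq0.
have hidem : opmul P P = P.
  by rewrite /P opscale_mul RR_VPP // opscaleA; congr opscale;
     rewrite -mulrA mulVf ?c_neq0 // mulr1.
apply: idem_adj => // z.
set x := opapp P z.
have hPx : opapp P x = x by rewrite /x -opapp_mul hidem.
have hRx : opapp R x = vscale c x by rewrite RP opscale_app hPx.
have hVx : opapp V (vtens x psi) = vtens x psi.
  apply: unit_fix => //.
  by rewrite -Rquad hRx innerZr inner_vtens -c_eq mulrC.
apply: vec_ext => y.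
rewrite inner_adj opadjK /P opscale_app innerZl.
rewrite (inner_conj x) Rquad -inner_conj inner_adj' (unit_fix_adj hU hVx) inner_vtens -c_eq.
by rewrite fmorphV /= c_real mulrCA mulVf ?c_neq0 // mulr1.
Qed.

Lemma I54 : c != 0 /\ orth_proj P -> positive_op R.
Proof.
case=> _ hP x.
by rewrite RP opscale_app innerZr proj_quad // mulr_ge0 ?c_ge0 ?inner_ge0.
Qed.

Lemma I5V : c != 0 /\ orth_proj P -> opapp V (vtens psi psi) = vtens psi psi.
Proof.
case=> _ hP.
have hRR : opmul R R = opscale c R.
  by rewrite RP opscale_mul hP.2 opscaleA.
set g := vsub (hvec psi psi) (vscale c psi).
have hg : g = @vzero C I.
  apply: inner_eq0; rewrite -planch.
  rewrite /g rho_sub rho_scale -/R -rho_hom -/R hRR.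
  by apply: big1 => i _; apply: big1 => j _; rewrite /opsub subrr rmorph0 mul0r.
have hh : inner psi (hvec psi psi) = c * c.
  have := congr1 (fun v => inner psi v) hg.
  rewrite /g innerBr innerZr inner0r -c_eq => /eqP; rewrite subr_eq0 => /eqP //.
have h2 : inner (vtens psi psi) (opapp V (vtens psi e)) = c * c.
  have h3 : inner (vtens psi e) (opapp (opadj V) (vtens psi psi)) = inner psi (hvec psi psi).
    rewrite /inner /hvec sum_pair; apply: eq_bigr => b _.
    rewrite mulr_sumr; apply: eq_bigr => c0 _; rewrite /vtens rmorphM /=; ring.
  by rewrite (inner_conj (opapp V (vtens psi e))) inner_adj' h3 hh rmorphM /= c_real.
apply: unit_fix => //.
rewrite -rho_quad -(rho_cyc_pp hp) -(rho_cyc_pe hp) rho_quad h2.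
by rewrite inner_vtens -c_eq.
Qed.

Let lam := \sum_i W i i.
Let TP : op C I := fun k l => Tp k l.

Lemma trTP : tr TP = n.
Proof. exact: trTp. Qed.

Lemma trR : tr R = lam.
Proof.
apply: (mulfI n_neq0).
have h1 : tr R = inner e (opapp TP psi).
  rewrite /tr /R /inner /opapp /TP /Tp.
  under eq_bigr do rewrite rhoE.
  transitivity (\sum_k \sum_l \sum_i (e k)^* * V (i,k) (i,l) * psi l).
    by rewrite sum_in2.
  apply: eq_bigr => k _; rewrite mulr_sumr; apply: eq_bigr => l _.
  by rewrite mulr_suml mulr_sumr; apply: eq_bigr => i _; ring.
rewrite h1 /TP Tp_Lm /psi -opapp_mul /p PL phiLm -PL tr_comm -Tp_Lm pTp tr_scale.
have -> : tr (fun k l => Tp k l) = n by exact: trTp.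
by rewrite mulrC.
Qed.

Lemma lam_idem : lam * lam = lam.
Proof.
have h := pTp W.
have h2 : opmul p (opmul p TP) = opscale (lam * lam) TP.
  by rewrite /TP h opmul_scaler h opscaleA.
rewrite opmulA hp.2 h in h2.
have := congr1 (@tr C I) h2; rewrite !tr_scale trTP => /(mulIf n_neq0) //.
Qed.

Lemma lam_le1 : lam <= 1.
Proof.
have h : lam * (lam - 1) = 0 by rewrite mulrBr mulr1 lam_idem subrr.
move/eqP: h; rewrite mulf_eq0 => /orP[/eqP -> | ]; first exact: ler01.
by rewrite subr_eq0 => /eqP ->.
Qed.

Lemma I45 : positive_op R -> c != 0 /\ orth_proj P.
Proof.
move=> hR.
have hsa := pos_selfadj hR.
have hRij : forall i j, R j i = (R i j)^*.
  by move=> i j; rewrite -{1}hsa /opadj.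
have trRR : tr (opmul R R) = c.
  rewrite c_eq -planch /tr /opmul; apply: eq_bigr => i _; apply: eq_bigr => j _.
  by rewrite (hRij i j) mulrC.
have bound : forall y, inner y (opapp R y) <= c * inner y y.
  move=> y; rewrite Rquad.
  have hr : (inner (vtens y psi) (opapp V (vtens y psi)))^* = inner (vtens y psi) (opapp V (vtens y psi)).
    by rewrite -Rquad pos_real.
  by rewrite (le_trans (unit_re hU hr)) // inner_vtens -c_eq mulrC.
have key : forall x, inner (opapp R x) (opapp R x) <= c * inner x (opapp R x).
  move=> x.
  set N := inner (opapp R x) (opapp R x); set a := inner x (opapp R x).
  have hN : 0 <= N by apply: inner_ge0.
  have ha : 0 <= a by apply: hR.
  have hcs := psd_cs x (opapp R x) hR.
  rewrite -/N -/a (geC0_conj hN) in hcs.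
  have hb := bound (opapp R x); rewrite -/N in hb.
  have h3 : N * N <= c * N * a.
    by rewrite (le_trans hcs) // ler_wpM2r // -opapp_mul.
  have [N0|Npos] := eqVneq N 0; first by rewrite N0 mulr_ge0 // c_ge0.
  have Ngt0 : 0 < N by rewrite lt_def Npos hN.
  by rewrite -(ler_pM2l Ngt0) mulrCA mulrA.
set M := opsub (opscale c R) (opmul R R).
have hM : positive_op M.
  move=> x; rewrite /M opapp_opsub innerBr opscale_app innerZr opapp_mul.
  by rewrite (inner_adj R x (opapp R x)) hsa subr_ge0 key.
have htr : tr M <= 0.
  rewrite /M tr_sub tr_scale trRR trR subr_le0.
  by rewrite -{2}[c]mulr1 ler_wpM2l ?c_ge0 ?lam_le1.
have hM0 := psd_tr0 hM htr.
have hRR : opmul R R = opscale c R.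
  by symmetry; apply: opsub_eq0; exact: hM0.
split; first exact: c_neq0.
split.
  by rewrite /P opscale_adj hsa fmorphV /= c_real.
by rewrite /P opscale_mul hRR opscaleA -mulrA mulVf ?c_neq0 // mulr1.
Qed.

Lemma tfae_main :
  [<-> op_le (optens p p) (delta V p);
       opmul (delta V p) (optens op1 p) = optens p p;
       opmul (delta V p) (optens p op1) = optens p p;
       positive_op (rho V (omega e (opapp p e)));
       inner e (opapp p e) != 0 /\
         orth_proj (opscale (inner e (opapp p e))^-1 (rho V (omega e (opapp p e))));
       pre_subgroup V e f /\ p = Lsl V (omega f f)].
Proof.
tfae.
- by move=> h1; apply: I62; apply: G6; exact: I1.
- by move=> h2; apply: I63; apply: G6; apply: I1; exact: I21.
- by move=> h3; apply: I54; apply: I65; apply: G6; apply: I1; exact: I31.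
- exact: I45.
- by move=> h5; apply: G6; exact: I5V.
- by move=> h6; apply: I21; exact: I62.
Qed.

End Thm.

End Main.




Theorem proposition3p11 (C : numClosedFieldType) (I : finType)
  (V : op C (I * I)%type) (e : vec C I) (p : op C I) :
  multiplicative_unitary V ->
  (forall xi : vec C I, fixed_vector V xi -> exists c : C, xi = vscale c e) ->
  fixed_vector V e -> inner e e = 1 ->
  inS V p -> orth_proj p -> p <> op0 ->
  let f := vscale (vnorm (opapp p e))^-1 (opapp p e) in
  [<-> op_le (optens p p) (delta V p);
       opmul (delta V p) (optens op1 p) = optens p p;
       opmul (delta V p) (optens p op1) = optens p p;
       positive_op (rho V (omega e (opapp p e)));
       inner e (opapp p e) != 0 /\
         orth_proj (opscale (inner e (opapp p e))^-1 (rho V (omega e (opapp p e))));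
       pre_subgroup V e f /\ p = Lsl V (omega f f)].
Proof.
move=> hMU hmult hfix he1 [w [hw hpw]] hp hp0.
subst p.
rewrite (Lsl_Lm V hw) in hp hp0 *.
exact: (tfae_main hMU hmult hfix he1 hp hp0).
Qed.
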